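(* Let $\mathbb{D}=\{z\in\mathbb{C}:|z|<1\}$ and let $F:\mathbb{D}\to\mathbb{C}$ be a function (no regularity assumed) such that $0\le \operatorname{Re}F(z)\le 1$ for all $z\in\mathbb{D}$ and such that the function $z\mapsto F(z)+z\overline{F(z)}$ is holomorphic on $\mathbb{D}$. Then $F$ is constant.
   Context: $\operatorname{Re}$ denotes the real part of a complex number and $\overline{w}$ the complex conjugate of $w$. *)

(* Defs.v *)
From Stdlib Require Import Reals.
From Coquelicot Require Import Coquelicot.
Open Scope R_scope.

Definition in_disc (z : C) : Prop := Cmod z < 1.

Definition holomorphic_on_disc (g : C -> C) : Prop :=
  forall z : C, in_disc z -> ex_derive (K := C_AbsRing) (V := C_NormedModule) g z.

(* Main.v *)
Require Import Defs.
From Stdlib Require Import Reals Lra Lia.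
From Coquelicot Require Import Coquelicot.
Open Scope R_scope.

Definition CI (f : R -> C) (a b : R) : C :=
  (RInt (fun t => Re (f t)) a b, RInt (fun t => Im (f t)) a b).

Definition Ccont (f : R -> C) (a b : R) :=
  forall x, a <= x <= b -> @continuous R_UniformSpace C_UniformSpace f x.

Lemma cont_Re (f : R -> C) x : @continuous R_UniformSpace C_UniformSpace f x ->
  continuous (fun t => Re (f t)) x.
Proof. intros H. apply (continuous_comp f fst); auto.
 unfold Re. destruct (f x) as [u v]. apply continuous_fst. Qed.

Lemma cont_Im (f : R -> C) x : @continuous R_UniformSpace C_UniformSpace f x ->
  continuous (fun t => Im (f t)) x.
Proof. intros H. apply (continuous_comp f snd); auto.
 unfold Im. destruct (f x) as [u v]. apply continuous_snd. Qed.

Lemma Ccont_exRe f a b : a <= b -> Ccont f a b -> ex_RInt (fun t => Re (f t)) a b.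
Proof. intros Hab H. apply (@ex_RInt_continuous R_CompleteNormedModule). intros z Hz.
 rewrite Rmin_left in Hz by lra. rewrite Rmax_right in Hz by lra.
 apply cont_Re, H; lra. Qed.
Lemma Ccont_exIm f a b : a <= b -> Ccont f a b -> ex_RInt (fun t => Im (f t)) a b.
Proof. intros Hab H. apply (@ex_RInt_continuous R_CompleteNormedModule). intros z Hz.
 rewrite Rmin_left in Hz by lra. rewrite Rmax_right in Hz by lra.
 apply cont_Im, H; lra. Qed.

Lemma CI_ext f g a b : (forall x, a <= x <= b -> f x = g x) -> a <= b -> CI f a b = CI g a b.
Proof. intros H Hab. unfold CI. f_equal; apply RInt_ext; intros x Hx;
 rewrite Rmin_left in Hx by lra; rewrite Rmax_right in Hx by lra; rewrite H; auto; lra. Qed.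

Lemma CI_plus f g a b : a <= b -> Ccont f a b -> Ccont g a b ->
  CI (fun t => (f t + g t)%C) a b = (CI f a b + CI g a b)%C.
Proof. intros Hab Hf Hg. unfold CI. 
 pose proof (Ccont_exRe f a b Hab Hf). pose proof (Ccont_exRe g a b Hab Hg).
 pose proof (Ccont_exIm f a b Hab Hf). pose proof (Ccont_exIm g a b Hab Hg).
 unfold Cplus; simpl. f_equal.
 - exact (RInt_plus (fun t => Re (f t)) (fun t => Re (g t)) a b H H0).
 - exact (RInt_plus (fun t => Im (f t)) (fun t => Im (g t)) a b H1 H2).
Qed.

Lemma CI_opp f a b : a <= b -> Ccont f a b ->
  CI (fun t => (- f t)%C) a b = (- CI f a b)%C.
Proof. intros Hab Hf. unfold CI.
 pose proof (Ccont_exRe f a b Hab Hf). pose proof (Ccont_exIm f a b Hab Hf).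
 unfold Copp; simpl. f_equal.
 - exact (RInt_opp (fun t => Re (f t)) a b H).
 - exact (RInt_opp (fun t => Im (f t)) a b H0).
Qed.

Lemma RInt_lin2 (f g : R -> R) (p q a b : R) : ex_RInt f a b -> ex_RInt g a b ->
  RInt (fun t => p * f t + q * g t) a b = p * RInt f a b + q * RInt g a b.
Proof. intros Hf Hg.
 rewrite (@RInt_plus R_CompleteNormedModule (fun t => scal p (f t)) (fun t => scal q (g t))).
 rewrite !(@RInt_scal R_CompleteNormedModule); auto.
 apply (@ex_RInt_scal R_CompleteNormedModule); auto.
 apply (@ex_RInt_scal R_CompleteNormedModule); auto.
Qed.

Lemma CI_scal (c : C) f a b : a <= b -> Ccont f a b ->
  CI (fun t => (c * f t)%C) a b = (c * CI f a b)%C.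
Proof. intros Hab Hf. unfold CI.
 pose proof (Ccont_exRe f a b Hab Hf) as H1. pose proof (Ccont_exIm f a b Hab Hf) as H2.
 assert (E1: RInt (fun t => Re (c * f t)%C) a b = RInt (fun t => Re c * Re (f t) + (- Im c) * Im (f t)) a b).
 { apply RInt_ext. intros. destruct c; unfold Re, Im, Cmult; simpl. ring. }
 assert (E2: RInt (fun t => Im (c * f t)%C) a b = RInt (fun t => Re c * Im (f t) + Im c * Re (f t)) a b).
 { apply RInt_ext. intros. destruct c; unfold Re, Im, Cmult; simpl. ring. }
 rewrite E1, E2, !RInt_lin2; auto.
 destruct c as [c1 c2]. unfold Cmult, Re, Im; simpl. f_equal; ring.
Qed.

Lemma CI_Chasles f a b c : a <= b -> b <= c -> Ccont f a c ->
  (CI f a b + CI f b c)%C = CI f a c.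
Proof. intros Hab Hbc Hf.
 assert (Ccont f a b) by (intros x Hx; apply Hf; lra).
 assert (Ccont f b c) by (intros x Hx; apply Hf; lra).
 unfold CI, Cplus; simpl. f_equal.
 - apply (RInt_Chasles (fun t => Re (f t))); apply Ccont_exRe; auto.
 - apply (RInt_Chasles (fun t => Im (f t))); apply Ccont_exIm; auto.
Qed.

Lemma CI_point f a : CI f a a = 0%C.
Proof. unfold CI. rewrite !RInt_point. reflexivity. Qed.

Lemma CI_bound f a b M : a <= b -> Ccont f a b ->
  (forall x, a <= x <= b -> Cmod (f x) <= M) -> Cmod (CI f a b) <= M * (b - a).
Proof. intros Hab Hf HM.
 destruct (Req_dec a b) as [<-|Hne].
 { rewrite CI_point, Cmod_0. lra. }
 assert (HM0: 0 <= M) by (pose proof (HM a ltac:(lra)); pose proof (Cmod_ge_0 (f a)); lra).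
 remember (CI f a b) as I eqn:HI.
 destruct (Req_dec (Cmod I) 0) as [H0|H0].
 { rewrite H0. apply Rmult_le_pos; lra. }
 assert (Hpos: 0 < Cmod I) by (pose proof (Cmod_ge_0 I); lra).
 assert (Hsq: Cmod I * Cmod I <= Cmod I * (M * (b - a))).
 { assert (E: Cmod I * Cmod I = RInt (fun t => Re I * Re (f t) + Im I * Im (f t)) a b).
   { rewrite (RInt_lin2 (fun t => Re (f t)) (fun t => Im (f t)) (Re I) (Im I) a b (Ccont_exRe f a b Hab Hf) (Ccont_exIm f a b Hab Hf)).
     pose proof (Cmod2_alt I) as HH. 
     replace (Cmod I * Cmod I) with (Cmod I ^ 2) by ring. rewrite HH.
     assert (Re I = RInt (fun t => Re (f t)) a b) as R1 by (rewrite HI; reflexivity).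
     assert (Im I = RInt (fun t => Im (f t)) a b) as R2 by (rewrite HI; reflexivity).
     rewrite <- R1, <- R2. ring. }
   rewrite E.
   apply Rle_trans with (RInt (fun _ => Cmod I * M) a b).
   - apply RInt_le; [exact Hab| | |].
     + apply (@ex_RInt_plus R_CompleteNormedModule (fun t => scal (Re I) (Re (f t))) (fun t => scal (Im I) (Im (f t)))).
       apply (@ex_RInt_scal R_CompleteNormedModule). apply Ccont_exRe; assumption.
       apply (@ex_RInt_scal R_CompleteNormedModule). apply Ccont_exIm; assumption.
     + apply ex_RInt_const.
     + intros x Hx.
       assert (Re I * Re (f x) + Im I * Im (f x) = Re (Cconj I * f x)%C) as H.
       { destruct I as [i1 i2], (f x) as [u v]; unfold Re, Im, Cconj, Cmult; cbn. ring. }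
       rewrite H. eapply Rle_trans. apply Rle_abs. eapply Rle_trans. apply re_le_Cmod.
       rewrite Cmod_mult, Cmod_conj. apply Rmult_le_compat_l. lra. apply HM; lra.
   - rewrite RInt_const. unfold scal. cbn. unfold mult. cbn. lra. }
 apply Rmult_le_reg_l with (Cmod I); auto.
Qed.

Lemma CI_FTC (P f : R -> C) a b : a <= b -> Ccont f a b ->
  (forall x, a <= x <= b -> is_derive (fun t => Re (P t)) x (Re (f x)) /\
                              is_derive (fun t => Im (P t)) x (Im (f x))) ->
  CI f a b = (P b - P a)%C.
Proof. intros Hab Hf HD. unfold CI.
 assert (A1: is_RInt (fun t => Re (f t)) a b (minus (Re (P b)) (Re (P a)))).
 { apply (@is_RInt_derive R_CompleteNormedModule (fun t => Re (P t))).
   - intros x Hx; rewrite Rmin_left, Rmax_right in Hx by lra; apply HD; lra.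
   - intros x Hx; rewrite Rmin_left, Rmax_right in Hx by lra; apply cont_Re, Hf; lra. }
 assert (A2: is_RInt (fun t => Im (f t)) a b (minus (Im (P b)) (Im (P a)))).
 { apply (@is_RInt_derive R_CompleteNormedModule (fun t => Im (P t))).
   - intros x Hx; rewrite Rmin_left, Rmax_right in Hx by lra; apply HD; lra.
   - intros x Hx; rewrite Rmin_left, Rmax_right in Hx by lra; apply cont_Im, Hf; lra. }
 apply (@is_RInt_unique R_CompleteNormedModule) in A1. apply (@is_RInt_unique R_CompleteNormedModule) in A2. rewrite A1, A2.
 destruct (P a), (P b). unfold Cminus, Cplus, Copp, minus, plus, opp, Re, Im; simpl. f_equal; ring.
Qed.

Definition E (t : R) : C := (cos t, sin t).

Definition CD (g : R -> C) (x : R) (d : C) :=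
  is_derive (fun t => Re (g t)) x (Re d) /\ is_derive (fun t => Im (g t)) x (Im d).

Lemma CD_const c x : CD (fun _ => c) x 0%C.
Proof. split; apply (@is_derive_const R_AbsRing R_NormedModule). Qed.

Lemma CD_plus g h x dg dh : CD g x dg -> CD h x dh -> CD (fun t => (g t + h t)%C) x (dg + dh)%C.
Proof. intros [A B] [C D]. split; simpl.
 - apply (@is_derive_plus R_AbsRing R_NormedModule (fun t => Re (g t)) (fun t => Re (h t))); auto.
 - apply (@is_derive_plus R_AbsRing R_NormedModule (fun t => Im (g t)) (fun t => Im (h t))); auto.
Qed.

Lemma rmult_der (u v : R -> R) x du dv : is_derive u x du -> is_derive v x dv ->
  is_derive (fun t => u t * v t) x (du * v x + u x * dv).
Proof. intros. apply (is_derive_mult u v x du dv); auto. intros; apply Rmult_comm. Qed.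

Lemma CD_mult g h x dg dh : CD g x dg -> CD h x dh ->
  CD (fun t => (g t * h t)%C) x (dg * h x + g x * dh)%C.
Proof. intros [A B] [C D]. split.
 - eapply is_derive_ext. { intros t. unfold Cmult, Re, Im. simpl. reflexivity. }
   eapply is_derive_ext with (f := fun t => Re (g t) * Re (h t) + (-1) * (Im (g t) * Im (h t))).
   { intros; unfold Re, Im; simpl; ring. }
   replace (Re (dg * h x + g x * dh)%C) with
     ((Re dg * Re (h x) + Re (g x) * Re dh) + (-1) * (Im dg * Im (h x) + Im (g x) * Im dh)).
   2:{ destruct dg, dh, (h x), (g x); unfold Re, Im, Cmult, Cplus; simpl; ring. }
   apply (@is_derive_plus R_AbsRing R_NormedModule); [apply rmult_der; auto|].
   apply (is_derive_scal (fun t => Im (g t) * Im (h t))). apply rmult_der; auto.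
 - eapply is_derive_ext with (f := fun t => Re (g t) * Im (h t) + Im (g t) * Re (h t)).
   { intros; unfold Re, Im, Cmult; simpl; ring. }
   replace (Im (dg * h x + g x * dh)%C) with
     ((Re dg * Im (h x) + Re (g x) * Im dh) + (Im dg * Re (h x) + Im (g x) * Re dh)).
   2:{ destruct dg, dh, (h x), (g x); unfold Re, Im, Cmult, Cplus; simpl; ring. }
   apply (@is_derive_plus R_AbsRing R_NormedModule); apply rmult_der; auto.
Qed.

Lemma CD_RtoC (u : R -> R) x d : is_derive u x d -> CD (fun t => RtoC (u t)) x (RtoC d).
Proof. intros H. split; simpl; auto. apply (@is_derive_const R_AbsRing R_NormedModule). Qed.

Lemma CD_E x : CD E x (Ci * E x)%C.
Proof. split; unfold E, Ci, Cmult, Re, Im; simpl.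
 - replace (0 * cos x - 1 * sin x) with (- sin x) by ring. apply is_derive_cos.
 - replace (0 * sin x + 1 * cos x) with (cos x) by ring. apply is_derive_sin.
Qed.

Lemma CD_ext g h x d : (forall t, g t = h t) -> CD g x d -> CD h x d.
Proof. intros He [A B]. split; eapply is_derive_ext; try eassumption; intros; simpl; rewrite He; auto. Qed.

Lemma CD_id x : CD (fun t => RtoC t) x 1%C.
Proof. apply CD_RtoC. apply (@is_derive_id R_AbsRing). Qed.

Lemma Ccont_parts (f : R -> C) x : continuous (fun t => Re (f t)) x ->
  continuous (fun t => Im (f t)) x -> @continuous R_UniformSpace C_UniformSpace f x.
Proof. intros H1 H2. unfold continuous in *.
 apply filterlim_locally. intros eps.
 apply filterlim_locally with (eps := eps) in H1.
 apply filterlim_locally with (eps := eps) in H2.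
 eapply filter_imp. 2: apply (filter_and _ _ H1 H2).
 intros t [A B]. revert A B. unfold Re, Im. destruct (f x), (f t). simpl. intros; split; assumption.
Qed.

Lemma Ccont_mult (f g : R -> C) x : @continuous R_UniformSpace C_UniformSpace f x ->
  @continuous R_UniformSpace C_UniformSpace g x ->
  @continuous R_UniformSpace C_UniformSpace (fun t => (f t * g t)%C) x.
Proof. intros Hf Hg. apply Ccont_parts.
 - apply continuous_ext with (f := fun t => minus (mult (Re (f t)) (Re (g t))) (mult (Im (f t)) (Im (g t)))).
   { intros t. destruct (f t), (g t). unfold Re, Im, Cmult. simpl. reflexivity. }
   apply (@continuous_minus R_UniformSpace R_AbsRing R_NormedModule);
   apply (@continuous_mult R_UniformSpace R_AbsRing); (apply cont_Re || apply cont_Im); assumption.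
 - apply continuous_ext with (f := fun t => plus (mult (Re (f t)) (Im (g t))) (mult (Im (f t)) (Re (g t)))).
   { intros t. destruct (f t), (g t). unfold Re, Im, Cmult. simpl. reflexivity. }
   apply (@continuous_plus R_UniformSpace R_AbsRing R_NormedModule);
   apply (@continuous_mult R_UniformSpace R_AbsRing); (apply cont_Re || apply cont_Im); assumption.
Qed.

Lemma Ccont_plus (f g : R -> C) x : @continuous R_UniformSpace C_UniformSpace f x ->
  @continuous R_UniformSpace C_UniformSpace g x ->
  @continuous R_UniformSpace C_UniformSpace (fun t => (f t + g t)%C) x.
Proof. intros Hf Hg. apply Ccont_parts.
 - apply continuous_ext with (f := fun t => plus (Re (f t)) (Re (g t))).
   { intros t. destruct (f t), (g t). reflexivity. }
   apply (@continuous_plus R_UniformSpace R_AbsRing R_NormedModule); apply cont_Re; assumption.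
 - apply continuous_ext with (f := fun t => plus (Im (f t)) (Im (g t))).
   { intros t. destruct (f t), (g t). reflexivity. }
   apply (@continuous_plus R_UniformSpace R_AbsRing R_NormedModule); apply cont_Im; assumption.
Qed.

Lemma Ccont_const (c : C) x : @continuous R_UniformSpace C_UniformSpace (fun _ => c) x.
Proof. apply continuous_const. Qed.

Lemma Ccont_RtoC (u : R -> R) x : continuous u x ->
  @continuous R_UniformSpace C_UniformSpace (fun t => RtoC (u t)) x.
Proof. intros H. apply Ccont_parts; simpl; auto. apply continuous_const. Qed.

Lemma Ccont_E x : @continuous R_UniformSpace C_UniformSpace E x.
Proof. apply Ccont_parts; unfold E, Re, Im; simpl.
 - apply continuity_pt_filterlim. apply continuity_cos.
 - apply continuity_pt_filterlim. apply continuity_sin.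
Qed.

Lemma Ccont_id x : @continuous R_UniformSpace C_UniformSpace (fun t => RtoC t) x.
Proof. apply Ccont_RtoC. apply continuous_id. Qed.

Definition Cdiff (H : C -> C) (w l : C) :=
  forall eps, 0 < eps -> exists del, 0 < del /\ forall y, Cmod (y - w) < del ->
    Cmod (H y - H w - l * (y - w)) <= eps * Cmod (y - w).

Lemma sqrt2_lt2 : sqrt 2 < 2.
Proof. rewrite <- (sqrt_square 2) at 2 by lra. apply sqrt_lt_1_alt. lra. Qed.

Lemma locally_Cmod (w : C) (P : C -> Prop) d : 0 < d ->
  (forall y, Cmod (y - w) < d -> P y) -> @locally C_UniformSpace w P.
Proof. intros Hd HP. assert (0 < d/2) as Hd2 by lra. exists (mkposreal _ Hd2). intros y Hy.
 apply HP. pose proof (C_NormedModule_mixin_compat2 w y (mkposreal _ Hd2) Hy) as K. simpl in K.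
 pose proof sqrt2_lt2. change (minus y w) with (y - w)%C in K.
 assert (0 <= Cmod (y - w)) by apply Cmod_ge_0. nra. Qed.

Lemma Cmod_ball (x y : C) (e : R) : Cmod (y - x) < e -> @ball C_UniformSpace x e y.
Proof. intros H. apply C_NormedModule_mixin_compat1. exact H. Qed.

Lemma Cdiff_cont H w l : Cdiff H w l -> @continuous C_UniformSpace C_UniformSpace H w.
Proof. intros HD. unfold continuous. apply filterlim_locally. intros eps.
 destruct (HD 1 Rlt_0_1) as [del [Hdel Hb]].
 set (d := Rmin del (eps / (Cmod l + 1))).
 assert (Hl: 0 < Cmod l + 1) by (pose proof (Cmod_ge_0 l); lra).
 assert (Hd: 0 < d). { unfold d. apply Rmin_glb_lt; auto. apply Rdiv_lt_0_compat; auto. apply cond_pos. }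
 apply (locally_Cmod w _ d Hd). intros y Hy. apply Cmod_ball.
 assert (Hy1: Cmod (y - w) < del) by (eapply Rlt_le_trans; [apply Hy| apply Rmin_l]).
 specialize (Hb y Hy1).
 replace (H y - H w)%C with ((H y - H w - l * (y - w)) + l * (y - w))%C by ring.
 eapply Rle_lt_trans. apply Cmod_triangle. rewrite Cmod_mult.
 assert (Cmod (y - w) < eps / (Cmod l + 1)) by (eapply Rlt_le_trans; [apply Hy| apply Rmin_r]).
 assert (Cmod (y - w) * (Cmod l + 1) < eps).
 { apply (Rmult_lt_compat_r (Cmod l + 1)) in H0; auto. unfold Rdiv in H0. rewrite Rmult_assoc, Rinv_l in H0; lra. }
 nra.
Qed.

Lemma mms_eq (a b c d : C) : @minus C_NormedModule (@minus C_NormedModule a b) (@scal C_AbsRing C_NormedModule c d) = (a - b - c * d)%C.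
Proof. reflexivity. Qed.

Lemma derive_Cdiff (g : C -> C) z l : @is_derive C_AbsRing C_NormedModule g z l -> Cdiff g z l.
Proof. intros [_ Hd]. intros eps Heps.
 assert (Hz : is_filter_lim (locally z) z) by (intros P HP; exact HP).
 specialize (Hd z Hz (mkposreal eps Heps)). destruct Hd as [e He].
 exists e. split. apply cond_pos. intros y Hy.
 specialize (He y Hy). 
 replace (g y - g z - l * (y - z))%C with (minus (minus (g y) (g z)) (scal (minus y z) l)).
 exact He. rewrite mms_eq. change (minus y z) with (y - z)%C. f_equal. apply Cmult_comm.
Qed.

Lemma Cdiff_derive (g : C -> C) z l : Cdiff g z l -> @is_derive C_AbsRing C_NormedModule g z l.
Proof. intros HD. split. apply is_linear_scal_l.
 intros x Hx. apply (@is_filter_lim_locally_unique C_AbsRing (AbsRing_NormedModule C_AbsRing)) in Hx. subst x.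
 intros eps. destruct (HD eps (cond_pos eps)) as [d [Hd Hb]].
 exists (mkposreal d Hd). intros y Hy. change (Cmod (y - z) < d) in Hy. change (Cmod (minus (minus (g y) (g z)) (scal (minus y z) l)) <= eps * Cmod (minus y z)).
 change (minus (minus (g y) (g z)) (scal (minus y z) l)) with (((g y - g z) - (y - z) * l)%C).
 change (minus y z) with (y - z)%C.
 replace ((g y - g z) - (y - z) * l)%C with (g y - g z - l * (y - z))%C by ring. apply Hb; auto.
Qed.

Lemma derive_Cdiff2 (g : C -> C) z l : @is_derive C_AbsRing (AbsRing_NormedModule C_AbsRing) g z l -> Cdiff g z l.
Proof. intros [_ Hd]. intros eps Heps.
 assert (Hz : is_filter_lim (locally z) z) by (intros P HP; exact HP).
 specialize (Hd z Hz (mkposreal eps Heps)). destruct Hd as [e He].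
 exists e. split. apply cond_pos. intros y Hy.
 specialize (He y Hy). 
 replace (g y - g z - l * (y - z))%C with (minus (minus (g y) (g z)) (scal (minus y z) l)).
 exact He. change (minus (minus (g y) (g z)) (scal (minus y z) l)) with ((g y - g z - (y - z) * l)%C). change (minus y z) with (y - z)%C. f_equal. apply Cmult_comm.
Qed.

Lemma Cdiff_derive2 (g : C -> C) z l : Cdiff g z l -> @is_derive C_AbsRing (AbsRing_NormedModule C_AbsRing) g z l.
Proof. intros HD. split. apply is_linear_scal_l.
 intros x Hx. apply (@is_filter_lim_locally_unique C_AbsRing (AbsRing_NormedModule C_AbsRing)) in Hx. subst x.
 intros eps. destruct (HD eps (cond_pos eps)) as [d [Hd Hb]].
 exists (mkposreal d Hd). intros y Hy. change (Cmod (y - z) < d) in Hy. change (Cmod (minus (minus (g y) (g z)) (scal (minus y z) l)) <= eps * Cmod (minus y z)).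
 change (minus (minus (g y) (g z)) (scal (minus y z) l)) with (((g y - g z) - (y - z) * l)%C).
 change (minus y z) with (y - z)%C.
 replace ((g y - g z) - (y - z) * l)%C with (g y - g z - l * (y - z))%C by ring. apply Hb; auto.
Qed.

Lemma Cdiff_mult f g z lf lg : Cdiff f z lf -> Cdiff g z lg ->
  Cdiff (fun w => (f w * g w)%C) z (lf * g z + f z * lg)%C.
Proof. intros Hf Hg. apply derive_Cdiff2.
 apply (@is_derive_mult C_AbsRing f g z lf lg); try apply Cdiff_derive2; auto.
 intros; apply Cmult_comm. Qed.

Lemma Cdiff_plus f g z lf lg : Cdiff f z lf -> Cdiff g z lg ->
  Cdiff (fun w => (f w + g w)%C) z (lf + lg)%C.
Proof. intros Hf Hg. apply derive_Cdiff.
 apply (@is_derive_plus C_AbsRing C_NormedModule f g z lf lg); try apply Cdiff_derive; auto. Qed.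

Lemma Cdiff_const (c : C) z : Cdiff (fun _ => c) z 0%C.
Proof. apply derive_Cdiff. apply (@is_derive_const C_AbsRing C_NormedModule). Qed.

Lemma Cdiff_id z : Cdiff (fun w => w) z 1%C.
Proof. apply derive_Cdiff2. exact (@is_derive_id C_AbsRing z). Qed.

Lemma Cdiff_ext f g z l : (forall w, f w = g w) -> Cdiff f z l -> Cdiff g z l.
Proof. intros He H eps Heps. destruct (H eps Heps) as [d [Hd Hb]]. exists d. split; auto.
 intros y Hy. rewrite <- !He. auto. Qed.

Lemma Cmod_lower (a h : C) : Cmod h < Cmod a / 2 -> Cmod a / 2 <= Cmod (a + h).
Proof. intros H. pose proof (Cmod_triangle (a + h) (- h)) as T.
 replace (a + h + - h)%C with a in T by ring. rewrite Cmod_opp in T. lra. Qed.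

Lemma Cdiff_inv (z w0 : C) : w0 <> z ->
  Cdiff (fun w => (/ (w - z))%C) w0 (- / ((w0 - z) * (w0 - z)))%C.
Proof. intros Hne eps Heps.
 set (a := (w0 - z)%C).
 assert (Ha : a <> 0%C). { unfold a. intros H. apply Hne.
   replace w0 with ((w0 - z) + z)%C by ring. rewrite H. ring. }
 assert (Hma : 0 < Cmod a) by (apply Cmod_gt_0; auto).
 exists (Rmin (Cmod a / 2) (eps * (Cmod a * Cmod a * Cmod a) / 2)). split.
 { apply Rmin_glb_lt. lra. apply Rdiv_lt_0_compat; [|lra]. apply Rmult_lt_0_compat; auto.
   repeat apply Rmult_lt_0_compat; auto. }
 intros y Hy. set (h := (y - w0)%C) in *.
 assert (Hh1 : Cmod h < Cmod a / 2) by (eapply Rlt_le_trans; [apply Hy|apply Rmin_l]).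
 assert (Hh2 : Cmod h < eps * (Cmod a * Cmod a * Cmod a) / 2) by (eapply Rlt_le_trans; [apply Hy|apply Rmin_r]).
 assert (Hyz : (y - z)%C = (a + h)%C) by (unfold a, h; ring).
 pose proof (Cmod_lower a h Hh1) as Hl.
 assert (Hah : (a + h)%C <> 0%C). { intros H. rewrite H, Cmod_0 in Hl. lra. }
 rewrite Hyz. fold a.
 replace (/ (a + h) - / a - - / (a * a) * h)%C with (h * h / (a * a * (a + h)))%C by (field; split; auto).
 rewrite Cmod_div by (apply Cmult_neq_0; auto; apply Cmult_neq_0; auto).
 rewrite !Cmod_mult.
 assert (0 <= Cmod h) by apply Cmod_ge_0.
 apply Rle_trans with (Cmod h * Cmod h / (Cmod a * Cmod a * (Cmod a / 2))).
 { unfold Rdiv. apply Rmult_le_compat_l. nra. apply Rinv_le_contravar.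
   repeat apply Rmult_lt_0_compat; lra. apply Rmult_le_compat_l. nra. auto. }
 apply Rle_trans with (Cmod h * (eps * (Cmod a * Cmod a * Cmod a) / 2) / (Cmod a * Cmod a * (Cmod a / 2))).
 { unfold Rdiv. apply Rmult_le_compat_r. left. apply Rinv_0_lt_compat. repeat apply Rmult_lt_0_compat; lra.
   apply Rmult_le_compat_l; lra. }
 right. field. lra.
Qed.

Record fam := Fam { fc0 : C; fc1 : C; fr0 : R; fr1 : R }.

Definition Gam (p : fam) (t th : R) : C :=
  (fc0 p + fc1 p * RtoC t + RtoC (fr0 p + fr1 p * t) * E th)%C.
Definition Gt (p : fam) (th : R) : C := (fc1 p + RtoC (fr1 p) * E th)%C.
Definition Gth (p : fam) (t th : R) : C := (RtoC (fr0 p + fr1 p * t) * (Ci * E th))%C.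

Definition fth p (H : C -> C) t := fun th => (H (Gam p t th) * Gth p t th)%C.
Definition ftt p (H : C -> C) th := fun t => (H (Gam p t th) * Gt p th)%C.

Definition Q p H t1 t2 a b : C :=
  (CI (fth p H t2) a b - CI (fth p H t1) a b - CI (ftt p H b) t1 t2 + CI (ftt p H a) t1 t2)%C.

Notation CC := (@continuous R_UniformSpace C_UniformSpace).
Notation CCC := (@continuous C_UniformSpace C_UniformSpace).

Lemma Gam_cont_th p t th : CC (fun x => Gam p t x) th.
Proof. unfold Gam. apply Ccont_plus. apply Ccont_const. apply Ccont_mult. apply Ccont_const. apply Ccont_E. Qed.

Lemma Gam_cont_t p th t : CC (fun x => Gam p x th) t.
Proof. unfold Gam. apply Ccont_plus. apply Ccont_plus. apply Ccont_const.
 apply Ccont_mult. apply Ccont_const. apply Ccont_id.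
 apply Ccont_mult. 2: apply Ccont_const. apply Ccont_RtoC.
 apply (@continuous_plus R_UniformSpace R_AbsRing R_NormedModule (fun _ => fr0 p) (fun x => fr1 p * x)).
 apply continuous_const. apply (@continuous_scal_r R_UniformSpace R_AbsRing R_NormedModule (fr1 p) (fun x => x)).
 apply continuous_id. Qed.

Lemma Gth_cont p t th : CC (fun x => Gth p t x) th.
Proof. unfold Gth. apply Ccont_mult. apply Ccont_const. apply Ccont_mult. apply Ccont_const. apply Ccont_E. Qed.

Lemma Gt_cont p th : CC (fun x => Gt p x) th.
Proof. unfold Gt. apply Ccont_plus. apply Ccont_const. apply Ccont_mult. apply Ccont_const. apply Ccont_E. Qed.

Lemma fth_cont p H t th : CCC H (Gam p t th) -> CC (fth p H t) th.
Proof. intros Hc. unfold fth. apply Ccont_mult. 2: apply Gth_cont.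
 apply (continuous_comp (fun x => Gam p t x) H). apply Gam_cont_th. exact Hc. Qed.

Lemma ftt_cont p H th t : CCC H (Gam p t th) -> CC (ftt p H th) t.
Proof. intros Hc. unfold ftt. apply Ccont_mult. 2: apply Ccont_const.
 apply (continuous_comp (fun x => Gam p x th) H). apply Gam_cont_t. exact Hc. Qed.

Definition Good p H t1 t2 a b := forall t th, t1 <= t <= t2 -> a <= th <= b -> CCC H (Gam p t th).

Lemma Good_sub p H t1 t2 a b t1' t2' a' b' : Good p H t1 t2 a b ->
  t1 <= t1' -> t2' <= t2 -> a <= a' -> b' <= b -> Good p H t1' t2' a' b'.
Proof. intros G h1 h2 h3 h4 t th Ht Hth. apply G; lra. Qed.

Lemma Q_split_t p H t1 tm t2 a b : t1 <= tm <= t2 -> a <= b -> Good p H t1 t2 a b ->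
  Q p H t1 t2 a b = (Q p H t1 tm a b + Q p H tm t2 a b)%C.
Proof. intros Htm Hab G. unfold Q.
 rewrite <- (CI_Chasles (ftt p H b) t1 tm t2) by (lra || (intros x Hx; apply ftt_cont, G; lra)).
 rewrite <- (CI_Chasles (ftt p H a) t1 tm t2) by (lra || (intros x Hx; apply ftt_cont, G; lra)).
 ring. Qed.

Lemma Q_split_th p H t1 t2 a m b : t1 <= t2 -> a <= m <= b -> Good p H t1 t2 a b ->
  Q p H t1 t2 a b = (Q p H t1 t2 a m + Q p H t1 t2 m b)%C.
Proof. intros Ht Hm G. unfold Q.
 rewrite <- (CI_Chasles (fth p H t2) a m b) by (lra || (intros x Hx; apply fth_cont, G; lra)).
 rewrite <- (CI_Chasles (fth p H t1) a m b) by (lra || (intros x Hx; apply fth_cont, G; lra)).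
 ring. Qed.

Lemma CD_eqd g x d d' : CD g x d -> d = d' -> CD g x d'.
Proof. intros H ->; auto. Qed.

Lemma CD_Gam_th p t x : CD (fun th => Gam p t th) x (Gth p t x).
Proof. unfold Gam, Gth. eapply CD_eqd.
 apply CD_plus. apply CD_const. apply CD_mult. apply CD_const. apply CD_E. cbv beta. ring. Qed.

Lemma CD_Gam_t p th x : CD (fun t => Gam p t th) x (Gt p th).
Proof. unfold Gam, Gt. eapply CD_eqd.
 apply CD_plus. apply CD_plus. apply CD_const. apply CD_mult. apply CD_const. apply CD_id.
 apply CD_mult. 2: apply CD_const. apply CD_RtoC.
 apply (@is_derive_plus R_AbsRing R_NormedModule (fun _ => fr0 p) (fun x => fr1 p * x)).
 apply (@is_derive_const R_AbsRing R_NormedModule).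
 apply (is_derive_scal (fun x => x)). apply (@is_derive_id R_AbsRing).
 unfold plus, zero, mult; simpl. cbv beta.
 unfold E, Cplus, Cmult, RtoC, one; destruct (fc1 p); simpl; apply injective_projections; simpl; ring. Qed.

Definition Prim (al be w : C) : C := (al * w + (be / 2) * (w * w))%C.

Lemma CD_Prim al be g x d : CD g x d -> CD (fun t => Prim al be (g t)) x ((al + be * g x) * d)%C.
Proof. intros H. unfold Prim. eapply CD_eqd.
 apply CD_plus. apply CD_mult. apply CD_const. exact H.
 apply CD_mult. apply CD_const. apply CD_mult; exact H.
 cbv beta. field. Qed.

Lemma Q_lin p (al be : C) t1 t2 a b : t1 <= t2 -> a <= b ->
  Q p (fun w => (al + be * w)%C) t1 t2 a b = 0%C.
Proof. intros Ht Hab. unfold Q.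
 assert (K: forall w, CCC (fun w => (al + be * w)%C) w).
 { intros w. eapply Cdiff_cont. eapply Cdiff_ext.
   2: { eapply Cdiff_plus. apply Cdiff_const. eapply Cdiff_mult. apply Cdiff_const. apply Cdiff_id. }
   intros; simpl. reflexivity. }
 rewrite (CI_FTC (fun th => Prim al be (Gam p t2 th)) (fth p _ t2) a b Hab).
 rewrite (CI_FTC (fun th => Prim al be (Gam p t1 th)) (fth p _ t1) a b Hab).
 rewrite (CI_FTC (fun t => Prim al be (Gam p t b)) (ftt p _ b) t1 t2 Ht).
 rewrite (CI_FTC (fun t => Prim al be (Gam p t a)) (ftt p _ a) t1 t2 Ht).
 ring.
 - intros x Hx. apply ftt_cont. apply K.
 - intros x Hx. exact (CD_Prim al be (fun t => Gam p t a) x (Gt p a) (CD_Gam_t p a x)).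
 - intros x Hx. apply ftt_cont. apply K.
 - intros x Hx. exact (CD_Prim al be (fun t => Gam p t b) x (Gt p b) (CD_Gam_t p b x)).
 - intros x Hx. apply fth_cont. apply K.
 - intros x Hx. exact (CD_Prim al be (fun t => Gam p t1 t) x (Gth p t1 x) (CD_Gam_th p t1 x)).
 - intros x Hx. apply fth_cont. apply K.
 - intros x Hx. exact (CD_Prim al be (fun t => Gam p t2 t) x (Gth p t2 x) (CD_Gam_th p t2 x)).
Qed.

Lemma CI_minus f g a b : a <= b -> Ccont f a b -> Ccont g a b ->
  CI (fun t => (f t - g t)%C) a b = (CI f a b - CI g a b)%C.
Proof. intros Hab Hf Hg. unfold CI.
 pose proof (Ccont_exRe f a b Hab Hf). pose proof (Ccont_exRe g a b Hab Hg).
 pose proof (Ccont_exIm f a b Hab Hf). pose proof (Ccont_exIm g a b Hab Hg).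
 assert (E1: RInt (fun t => Re (f t - g t)%C) a b = RInt (fun t => 1 * Re (f t) + (-1) * Re (g t)) a b).
 { apply RInt_ext. intros. destruct (f x), (g x); unfold Re, Cminus, Cplus, Copp; simpl. ring. }
 assert (E2: RInt (fun t => Im (f t - g t)%C) a b = RInt (fun t => 1 * Im (f t) + (-1) * Im (g t)) a b).
 { apply RInt_ext. intros. destruct (f x), (g x); unfold Im, Cminus, Cplus, Copp; simpl. ring. }
 rewrite E1, E2, !RInt_lin2; auto. unfold Cminus, Cplus, Copp; simpl. f_equal; ring.
Qed.

Lemma Q_minus p H K t1 t2 a b : t1 <= t2 -> a <= b -> Good p H t1 t2 a b -> Good p K t1 t2 a b ->
  Q p (fun w => (H w - K w)%C) t1 t2 a b = (Q p H t1 t2 a b - Q p K t1 t2 a b)%C.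
Proof. intros Ht Hab GH GK. unfold Q.
 assert (A1: forall t, t1 <= t <= t2 -> CI (fth p (fun w => (H w - K w)%C) t) a b = (CI (fth p H t) a b - CI (fth p K t) a b)%C).
 { intros t Htt. rewrite <- CI_minus; auto. apply CI_ext; auto. intros; unfold fth; ring.
   intros x Hx; apply fth_cont, GH; lra. intros x Hx; apply fth_cont, GK; lra. }
 assert (A2: forall th, a <= th <= b -> CI (ftt p (fun w => (H w - K w)%C) th) t1 t2 = (CI (ftt p H th) t1 t2 - CI (ftt p K th) t1 t2)%C).
 { intros th Htt. rewrite <- CI_minus; auto. apply CI_ext; auto. intros; unfold ftt; ring.
   intros x Hx; apply ftt_cont, GH; lra. intros x Hx; apply ftt_cont, GK; lra. }
 rewrite !A1, !A2 by lra. ring.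
Qed.

Lemma Cmod_minus_le (x y : C) : Cmod (x - y) <= Cmod x + Cmod y.
Proof. unfold Cminus. eapply Rle_trans. apply Cmod_triangle. rewrite Cmod_opp. lra. Qed.

Lemma Cmod4 (x y z w : C) : Cmod (x - y - z + w) <= Cmod x + Cmod y + Cmod z + Cmod w.
Proof. eapply Rle_trans. apply Cmod_triangle.
 pose proof (Cmod_minus_le (x - y) z). pose proof (Cmod_minus_le x y). lra. Qed.

Lemma Q_bound p H t1 t2 a b M K : t1 <= t2 -> a <= b -> Good p H t1 t2 a b ->
  (forall t th, t1 <= t <= t2 -> a <= th <= b -> Cmod (H (Gam p t th)) <= M) ->
  (forall th, Cmod (Gt p th) <= K) ->
  (forall t th, t1 <= t <= t2 -> Cmod (Gth p t th) <= K) ->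
  Cmod (Q p H t1 t2 a b) <= 2 * (M * K) * (b - a) + 2 * (M * K) * (t2 - t1).
Proof. intros Ht Hab G HM HK1 HK2. unfold Q. eapply Rle_trans. apply Cmod4.
 assert (B1: forall t, t1 <= t <= t2 -> Cmod (CI (fth p H t) a b) <= (M * K) * (b - a)).
 { intros t Htt. apply CI_bound; auto. intros x Hx; apply fth_cont, G; lra.
   intros x Hx. unfold fth. rewrite Cmod_mult. apply Rmult_le_compat; try apply Cmod_ge_0; auto. }
 assert (B2: forall th, a <= th <= b -> Cmod (CI (ftt p H th) t1 t2) <= (M * K) * (t2 - t1)).
 { intros th Htt. apply CI_bound; auto. intros x Hx; apply ftt_cont, G; lra.
   intros x Hx. unfold ftt. rewrite Cmod_mult. apply Rmult_le_compat; try apply Cmod_ge_0; auto. }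
 pose proof (B1 t1 ltac:(lra)). pose proof (B1 t2 ltac:(lra)).
 pose proof (B2 a ltac:(lra)). pose proof (B2 b ltac:(lra)). lra.
Qed.

Lemma Cmod_E t : Cmod (E t) = 1.
Proof. unfold Cmod, E. simpl. rewrite !Rmult_1_r. pose proof (sin2_cos2 t) as K. unfold Rsqr in K. rewrite Rplus_comm, K. apply sqrt_1. Qed.

Lemma Cmod_le_parts (z : C) : Cmod z <= Rabs (Re z) + Rabs (Im z).
Proof. unfold Cmod. rewrite <- (sqrt_square (Rabs (Re z) + Rabs (Im z))).
 2: { pose proof (Rabs_pos (Re z)); pose proof (Rabs_pos (Im z)); lra. }
 apply sqrt_le_1_alt. destruct z as [x y]; simpl. rewrite !Rmult_1_r.
 pose proof (Rabs_pos x); pose proof (Rabs_pos y).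
 unfold Re, Im; simpl. unfold Rabs in *; destruct (Rcase_abs x), (Rcase_abs y); nra. Qed.

Lemma E_lip a b : Cmod (E a - E b) <= 2 * Rabs (a - b).
Proof. eapply Rle_trans. apply Cmod_le_parts. unfold E, Re, Im, Cminus, Cplus, Copp; simpl.
 destruct (MVT_abs cos (fun x => - sin x) b a) as [c [Hc _]].
 { intros; apply derivable_pt_lim_cos. }
 destruct (MVT_abs sin cos b a) as [d [Hd _]].
 { intros; apply derivable_pt_lim_sin. }
 replace (cos a + - cos b) with (cos a - cos b) by ring.
 replace (sin a + - sin b) with (sin a - sin b) by ring.
 rewrite Hc, Hd. rewrite Rabs_Ropp.
 pose proof (SIN_bound c); pose proof (COS_bound d).
 assert (Rabs (sin c) <= 1) by (apply Rabs_le; lra).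
 assert (Rabs (cos d) <= 1) by (apply Rabs_le; lra).
 pose proof (Rabs_pos (a - b)). nra. Qed.

Definition Kf p T1 T2 := Cmod (fc1 p) + Rabs (fr1 p) + 2 * (Rabs (fr0 p) + Rabs (fr1 p) * (Rabs T1 + Rabs T2)) + 1.

Lemma Kf_pos p T1 T2 : 1 <= Kf p T1 T2.
Proof. unfold Kf. pose proof (Cmod_ge_0 (fc1 p)). pose proof (Rabs_pos (fr1 p)). pose proof (Rabs_pos (fr0 p)).
 pose proof (Rabs_pos T1). pose proof (Rabs_pos T2). 
 assert (0 <= Rabs (fr1 p) * (Rabs T1 + Rabs T2)) by (apply Rmult_le_pos; lra). lra. Qed.

Lemma rho_bound p T1 T2 t : T1 <= t <= T2 ->
  Rabs (fr0 p + fr1 p * t) <= Rabs (fr0 p) + Rabs (fr1 p) * (Rabs T1 + Rabs T2).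
Proof. intros Ht. eapply Rle_trans. apply Rabs_triang. rewrite Rabs_mult.
 apply Rplus_le_compat_l. apply Rmult_le_compat_l. apply Rabs_pos.
 pose proof (Rabs_pos T1). pose proof (Rabs_pos T2).
 unfold Rabs in *. destruct (Rcase_abs t), (Rcase_abs T1), (Rcase_abs T2); lra. Qed.

Lemma Gt_bound p T1 T2 th : Cmod (Gt p th) <= Kf p T1 T2.
Proof. unfold Gt, Kf. eapply Rle_trans. apply Cmod_triangle. rewrite Cmod_mult, Cmod_E, Cmod_R.
 pose proof (Rabs_pos (fr0 p)). pose proof (Rabs_pos T1). pose proof (Rabs_pos T2). pose proof (Rabs_pos (fr1 p)).
 assert (0 <= Rabs (fr1 p) * (Rabs T1 + Rabs T2)) by (apply Rmult_le_pos; lra). lra. Qed.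

Lemma Gth_bound p T1 T2 t th : T1 <= t <= T2 -> Cmod (Gth p t th) <= Kf p T1 T2.
Proof. intros Ht. unfold Gth, Kf. rewrite !Cmod_mult, Cmod_E, Cmod_Ci, Cmod_R.
 pose proof (rho_bound p T1 T2 t Ht). pose proof (Cmod_ge_0 (fc1 p)). pose proof (Rabs_pos (fr1 p)).
 pose proof (Rabs_pos (fr0 p)).
 pose proof (Rabs_pos T1). pose proof (Rabs_pos T2). 
 assert (0 <= Rabs (fr1 p) * (Rabs T1 + Rabs T2)) by (apply Rmult_le_pos; lra). lra. Qed.

Lemma Gam_lip p T1 T2 t th t' th' : T1 <= t <= T2 ->
  Cmod (Gam p t th - Gam p t' th') <= Kf p T1 T2 * (Rabs (t - t') + Rabs (th - th')).
Proof. intros Ht.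
 replace (Gam p t th - Gam p t' th')%C with
   (fc1 p * RtoC (t - t') + RtoC (fr0 p + fr1 p * t) * (E th - E th') + RtoC (fr1 p * (t - t')) * E th')%C.
 2:{ unfold Gam. rewrite !RtoC_plus, !RtoC_mult, RtoC_minus. ring. }
 eapply Rle_trans. apply Cmod_triangle. eapply Rle_trans. apply Rplus_le_compat_r. apply Cmod_triangle.
 rewrite !Cmod_mult, !Cmod_R, Cmod_E, Rabs_mult.
 pose proof (E_lip th th'). pose proof (rho_bound p T1 T2 t Ht).
 pose proof (Rabs_pos (t - t')). pose proof (Rabs_pos (th - th')). pose proof (Rabs_pos (fr0 p + fr1 p * t)).
 pose proof (Cmod_ge_0 (E th - E th')).
 assert (Rabs (fr0 p + fr1 p * t) * Cmod (E th - E th') <= (Rabs (fr0 p) + Rabs (fr1 p) * (Rabs T1 + Rabs T2)) * (2 * Rabs (th - th'))).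
 { apply Rmult_le_compat; auto. }
 unfold Kf. pose proof (Cmod_ge_0 (fc1 p)). pose proof (Rabs_pos (fr1 p)). nra. Qed.

Record Rect := Rc { t1_ : R; t2_ : R; a_ : R; b_ : R }.

Definition QR p H r := Q p H (t1_ r) (t2_ r) (a_ r) (b_ r).
Definition ch1 r := Rc (t1_ r) ((t1_ r + t2_ r)/2) (a_ r) ((a_ r + b_ r)/2).
Definition ch2 r := Rc (t1_ r) ((t1_ r + t2_ r)/2) ((a_ r + b_ r)/2) (b_ r).
Definition ch3 r := Rc ((t1_ r + t2_ r)/2) (t2_ r) (a_ r) ((a_ r + b_ r)/2).
Definition ch4 r := Rc ((t1_ r + t2_ r)/2) (t2_ r) ((a_ r + b_ r)/2) (b_ r).

Lemma QR_four p H r : t1_ r <= t2_ r -> a_ r <= b_ r -> Good p H (t1_ r) (t2_ r) (a_ r) (b_ r) ->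
  QR p H r = (QR p H (ch1 r) + QR p H (ch2 r) + QR p H (ch3 r) + QR p H (ch4 r))%C.
Proof. intros Ht Hab G. destruct r as [t1 t2 a b]. unfold QR, ch1, ch2, ch3, ch4; simpl in *.
 rewrite (Q_split_t p H t1 ((t1+t2)/2) t2 a b) by (auto; lra).
 rewrite (Q_split_th p H t1 ((t1+t2)/2) a ((a+b)/2) b) by (try lra; eapply Good_sub; eauto; lra).
 rewrite (Q_split_th p H ((t1+t2)/2) t2 a ((a+b)/2) b) by (try lra; eapply Good_sub; eauto; lra).
 ring. Qed.

Definition step p H r :=
  if Rle_dec (Cmod (QR p H r) / 4) (Cmod (QR p H (ch1 r))) then ch1 r
  else if Rle_dec (Cmod (QR p H r) / 4) (Cmod (QR p H (ch2 r))) then ch2 r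
  else if Rle_dec (Cmod (QR p H r) / 4) (Cmod (QR p H (ch3 r))) then ch3 r
  else ch4 r.

Lemma step_prop p H r : t1_ r <= t2_ r -> a_ r <= b_ r -> Good p H (t1_ r) (t2_ r) (a_ r) (b_ r) ->
  let r' := step p H r in
  t1_ r <= t1_ r' /\ t2_ r' <= t2_ r /\ a_ r <= a_ r' /\ b_ r' <= b_ r /\
  t2_ r' - t1_ r' = (t2_ r - t1_ r) / 2 /\ b_ r' - a_ r' = (b_ r - a_ r) / 2 /\
  Cmod (QR p H r) / 4 <= Cmod (QR p H r').
Proof. intros Ht Hab G r'. unfold r', step.
 destruct (Rle_dec _ (Cmod (QR p H (ch1 r)))).
 { unfold ch1; simpl. repeat split; try lra; auto. }
 destruct (Rle_dec _ (Cmod (QR p H (ch2 r)))).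
 { unfold ch2; simpl. repeat split; try lra; auto. }
 destruct (Rle_dec _ (Cmod (QR p H (ch3 r)))).
 { unfold ch3; simpl. repeat split; try lra; auto. }
 unfold ch4 at 1 2 3 4 5 6 7 8; simpl. repeat split; try lra.
 pose proof (QR_four p H r Ht Hab G) as E4.
 assert (Cmod (QR p H r) <= Cmod (QR p H (ch1 r)) + Cmod (QR p H (ch2 r)) + Cmod (QR p H (ch3 r)) + Cmod (QR p H (ch4 r))).
 { rewrite E4. eapply Rle_trans. apply Cmod_triangle. apply Rplus_le_compat_r.
   eapply Rle_trans. apply Cmod_triangle. apply Rplus_le_compat_r. apply Cmod_triangle. }
 lra. Qed.

Fixpoint sq p H r0 n := match n with O => r0 | S n => step p H (sq p H r0 n) end.

Lemma sq_inv p H T1 T2 A B n : T1 <= T2 -> A <= B -> Good p H T1 T2 A B ->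
  let r := sq p H (Rc T1 T2 A B) n in
  T1 <= t1_ r /\ t1_ r <= t2_ r /\ t2_ r <= T2 /\ A <= a_ r /\ a_ r <= b_ r /\ b_ r <= B /\
  t2_ r - t1_ r = (T2 - T1) / 2 ^ n /\ b_ r - a_ r = (B - A) / 2 ^ n /\
  Cmod (QR p H (Rc T1 T2 A B)) / 4 ^ n <= Cmod (QR p H r).
Proof. intros HT HA G. induction n as [|n IH]; intros r.
 - unfold r; simpl. repeat split; lra.
 - simpl in r. destruct IH as (h1 & h2 & h3 & h4 & h5 & h6 & h7 & h8 & h9).
   set (r0 := sq p H (Rc T1 T2 A B) n) in *.
   assert (G0 : Good p H (t1_ r0) (t2_ r0) (a_ r0) (b_ r0)) by (eapply Good_sub; eauto).
   destruct (step_prop p H r0 h2 h5 G0) as (k1 & k2 & k3 & k4 & k5 & k6 & k7).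
   unfold r. fold r0. simpl pow.
   assert (0 < 2 ^ n) by (apply pow_lt; lra). assert (0 < 4 ^ n) by (apply pow_lt; lra).
   repeat split; try lra.
   + rewrite k5, h7. field. lra.
   + rewrite k6, h8. field. lra.
   + eapply Rle_trans. 2: exact k7. 
     replace (Cmod (QR p H (Rc T1 T2 A B)) / (4 * 4 ^ n)) with ((Cmod (QR p H (Rc T1 T2 A B)) / 4 ^ n) / 4) by (field; lra).
     lra.
Qed.

Lemma sq_step p H T1 T2 A B n : T1 <= T2 -> A <= B -> Good p H T1 T2 A B ->
  let r := sq p H (Rc T1 T2 A B) n in let r' := sq p H (Rc T1 T2 A B) (S n) in
  t1_ r <= t1_ r' /\ t2_ r' <= t2_ r /\ a_ r <= a_ r' /\ b_ r' <= b_ r.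
Proof. intros HT HA G r r'. destruct (sq_inv p H T1 T2 A B n HT HA G) as (h1 & h2 & h3 & h4 & h5 & h6 & _).
 fold r in h1, h2, h3, h4, h5, h6.
 assert (G0 : Good p H (t1_ r) (t2_ r) (a_ r) (b_ r)) by (eapply Good_sub; eauto).
 destruct (step_prop p H r h2 h5 G0) as (k1 & k2 & k3 & k4 & _). unfold r'. simpl. fold r. auto. Qed.

Lemma sq_nest p H T1 T2 A B n k : T1 <= T2 -> A <= B -> Good p H T1 T2 A B ->
  let r := sq p H (Rc T1 T2 A B) n in let r' := sq p H (Rc T1 T2 A B) (n + k) in
  t1_ r <= t1_ r' /\ t2_ r' <= t2_ r /\ a_ r <= a_ r' /\ b_ r' <= b_ r.
Proof. intros HT HA G. induction k as [|k IH]; intros r r'.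
 - unfold r'. rewrite Nat.add_0_r. fold r. lra.
 - destruct IH as (i1 & i2 & i3 & i4).
   destruct (sq_step p H T1 T2 A B (n + k) HT HA G) as (j1 & j2 & j3 & j4).
   unfold r'. rewrite Nat.add_succ_r. fold r in i1, i2, i3, i4. lra.
Qed.

Lemma sq_point p H T1 T2 A B : T1 <= T2 -> A <= B -> Good p H T1 T2 A B ->
  exists ts ths, forall n, let r := sq p H (Rc T1 T2 A B) n in
    t1_ r <= ts <= t2_ r /\ a_ r <= ths <= b_ r.
Proof. intros HT HA G.
 set (S := fun n => sq p H (Rc T1 T2 A B) n).
 assert (U1: forall k n, t1_ (S k) <= t2_ (S n)).
 { intros k n. destruct (Compare_dec.le_lt_dec k n) as [Hk|Hk].
   - destruct (sq_nest p H T1 T2 A B k (n - k) HT HA G) as (i1 & _ ).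
     replace (k + (n - k))%nat with n in i1 by lia.
     destruct (sq_inv p H T1 T2 A B n HT HA G) as (_ & h2 & _). unfold S. lra.
   - destruct (sq_nest p H T1 T2 A B n (k - n) HT HA G) as (_ & i2 & _).
     replace (n + (k - n))%nat with k in i2 by lia.
     destruct (sq_inv p H T1 T2 A B k HT HA G) as (_ & h2 & _). unfold S. lra. }
 assert (U2: forall k n, a_ (S k) <= b_ (S n)).
 { intros k n. destruct (Compare_dec.le_lt_dec k n) as [Hk|Hk].
   - destruct (sq_nest p H T1 T2 A B k (n - k) HT HA G) as (_ & _ & i1 & _ ).
     replace (k + (n - k))%nat with n in i1 by lia.
     destruct (sq_inv p H T1 T2 A B n HT HA G) as (_ & _ & _ & _ & h2 & _). unfold S. lra.
   - destruct (sq_nest p H T1 T2 A B n (k - n) HT HA G) as (_ & _ & _ & i2).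
     replace (n + (k - n))%nat with k in i2 by lia.
     destruct (sq_inv p H T1 T2 A B k HT HA G) as (_ & _ & _ & _ & h2 & _). unfold S. lra. }
 destruct (completeness (fun x => exists n, x = t1_ (S n))) as [ts [Hub Hlub]].
 { exists (t2_ (S O)). intros x [n ->]. apply U1. }
 { exists (t1_ (S O)). exists O. auto. }
 destruct (completeness (fun x => exists n, x = a_ (S n))) as [ths [Hub' Hlub']].
 { exists (b_ (S O)). intros x [n ->]. apply U2. }
 { exists (a_ (S O)). exists O. auto. }
 exists ts, ths. intros n r. fold (S n) in r. unfold r. repeat split.
 - apply Hub. exists n. auto.
 - apply Hlub. intros x [k ->]. apply U1.
 - apply Hub'. exists n. auto.
 - apply Hlub'. intros x [k ->]. apply U2.
Qed.

Lemma INR_le_pow2 n : INR n <= 2 ^ n.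
Proof. induction n. simpl; lra. rewrite S_INR. simpl. assert (1 <= 2 ^ n) by (apply pow_R1_Rle; lra). lra. Qed.

Lemma pow2_large x : exists n, x < 2 ^ n.
Proof. destruct (Rle_lt_dec x 0).
 - exists O. simpl. lra.
 - destruct (archimed_cor1 (/ x)) as [N [HN HN0]]. apply Rinv_0_lt_compat; auto.
   exists N. eapply Rlt_le_trans. 2: apply INR_le_pow2.
   assert (0 < INR N) by (apply lt_0_INR; lia).
   apply Rinv_lt_cancel; auto. Qed.

Lemma CCC_minus (f g : C -> C) w : CCC f w -> CCC g w -> CCC (fun x => (f x - g x)%C) w.
Proof. intros Hf Hg. apply (@continuous_minus C_UniformSpace C_AbsRing C_NormedModule f g w Hf Hg). Qed.

Theorem goursat p H T1 T2 A B : T1 <= T2 -> A <= B ->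
  (forall t th, T1 <= t <= T2 -> A <= th <= B -> exists l, Cdiff H (Gam p t th) l) ->
  Q p H T1 T2 A B = 0%C.
Proof. intros HT HA HD.
 assert (G : Good p H T1 T2 A B).
 { intros t th Ht Hth. destruct (HD t th Ht Hth) as [l Hl]. eapply Cdiff_cont; eauto. }
 destruct (Req_dec (Cmod (Q p H T1 T2 A B)) 0) as [Z|NZ]. { apply Cmod_eq_0; auto. }
 exfalso. set (A0 := Cmod (Q p H T1 T2 A B)) in *.
 assert (HA0 : 0 < A0) by (pose proof (Cmod_ge_0 (Q p H T1 T2 A B)); unfold A0 in *; lra).
 destruct (sq_point p H T1 T2 A B HT HA G) as [ts [ths Hp]].
 destruct (Hp O) as [P1 P2]; simpl in P1, P2.
 destruct (HD ts ths P1 P2) as [l Hl].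
 set (w0 := Gam p ts ths) in *.
 set (K := Kf p T1 T2). assert (HK : 1 <= K) by apply Kf_pos.
 set (d0 := (T2 - T1) + (B - A)).
 assert (Hd0 : 0 <= d0) by (unfold d0; lra).
 set (eps := A0 / (4 * (K * K) * (d0 * d0) + 1)).
 assert (Hden : 0 < 4 * (K * K) * (d0 * d0) + 1).
 { assert (0 <= K * K * (d0 * d0)) by (apply Rmult_le_pos; apply Rmult_le_pos; lra). lra. }
 assert (Heps : 0 < eps) by (unfold eps; apply Rdiv_lt_0_compat; auto).
 destruct (Hl eps Heps) as [del [Hdel Hb]].
 destruct (pow2_large (K * d0 / del)) as [n Hn].
 assert (H2n : 0 < 2 ^ n) by (apply pow_lt; lra).
 set (dn := d0 / 2 ^ n).
 assert (Hdn : K * dn < del).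
 { unfold dn. apply (Rmult_lt_compat_r del) in Hn; auto. unfold Rdiv in *.
   rewrite Rmult_assoc, Rinv_l in Hn by lra. rewrite Rmult_1_r in Hn.
   apply (Rmult_lt_reg_r (2 ^ n)); auto. rewrite !Rmult_assoc, Rinv_l by lra. lra. }
 assert (Hdn0 : 0 <= dn) by (unfold dn; apply Rdiv_le_0_compat; lra).
 destruct (sq_inv p H T1 T2 A B n HT HA G) as (h1 & h2 & h3 & h4 & h5 & h6 & h7 & h8 & h9).
 set (r := sq p H (Rc T1 T2 A B) n) in *.
 destruct (Hp n) as [Q1 Q2]. fold r in Q1, Q2.
 assert (Hsz : (t2_ r - t1_ r) + (b_ r - a_ r) = dn) by (unfold dn, d0; rewrite h7, h8; field; lra).
 set (Lf := fun w => (H w0 - l * w0 + l * w)%C).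
 assert (GL : Good p Lf (t1_ r) (t2_ r) (a_ r) (b_ r)).
 { intros t th _ _. eapply Cdiff_cont. eapply Cdiff_ext.
   2: { eapply Cdiff_plus. apply Cdiff_const. eapply Cdiff_mult. apply Cdiff_const. apply Cdiff_id. }
   intros; unfold Lf; reflexivity. }
 assert (Gr : Good p H (t1_ r) (t2_ r) (a_ r) (b_ r)) by (eapply Good_sub; eauto).
 assert (EQ : QR p H r = Q p (fun w => (H w - Lf w)%C) (t1_ r) (t2_ r) (a_ r) (b_ r)).
 { rewrite Q_minus; auto. unfold Lf. rewrite Q_lin by lra. unfold QR. ring. }
 assert (BND : Cmod (QR p H r) <= 2 * ((eps * (K * dn)) * K) * (b_ r - a_ r) + 2 * ((eps * (K * dn)) * K) * (t2_ r - t1_ r)).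
 { rewrite EQ. apply Q_bound; auto.
   - intros t th Ht Hth. apply CCC_minus; auto.
   - intros t th Ht Hth.
     assert (Hw : Cmod (Gam p t th - w0) <= K * dn).
     { unfold w0, K. eapply Rle_trans. apply Gam_lip with (T1 := T1) (T2 := T2). lra.
       apply Rmult_le_compat_l. pose proof (Kf_pos p T1 T2); lra.
       rewrite <- Hsz. unfold Rabs; destruct (Rcase_abs (t - ts)), (Rcase_abs (th - ths)); lra. }
     unfold Lf. replace (H (Gam p t th) - (H w0 - l * w0 + l * Gam p t th))%C with
       (H (Gam p t th) - H w0 - l * (Gam p t th - w0))%C by ring.
     eapply Rle_trans. apply Hb. lra. apply Rmult_le_compat_l; lra.
   - intros th. apply Gt_bound.
   - intros t th Ht. apply Gth_bound. lra. }
 assert (A0 / 4 ^ n <= 2 * eps * (K * K) * (dn * dn)).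
 { eapply Rle_trans. exact h9. eapply Rle_trans. exact BND. right.
   replace (dn * dn) with (dn * ((t2_ r - t1_ r) + (b_ r - a_ r))) by (rewrite Hsz; auto). ring. }
 assert (E4 : 4 ^ n = 2 ^ n * 2 ^ n) by (rewrite <- Rpow_mult_distr; f_equal; lra).
 assert (A0 <= 2 * eps * (K * K) * (d0 * d0)).
 { unfold dn in H0. rewrite E4 in H0.
   replace (2 * eps * (K * K) * (d0 / 2 ^ n * (d0 / 2 ^ n))) with ((2 * eps * (K * K) * (d0 * d0)) / (2 ^ n * 2 ^ n)) in H0 by (field; lra).
   unfold Rdiv in H0. apply Rmult_le_reg_r in H0; auto. apply Rinv_0_lt_compat. nra. }
 assert (2 * eps * (K * K) * (d0 * d0) < A0).
 { unfold eps. set (x := K * K * (d0 * d0)).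
   assert (0 <= x) by (unfold x; apply Rmult_le_pos; apply Rmult_le_pos; lra).
   replace (2 * (A0 / (4 * (K * K) * (d0 * d0) + 1)) * (K * K) * (d0 * d0)) with (A0 * (2 * x / (4 * x + 1))) by (unfold x; field; lra).
   assert (2 * x / (4 * x + 1) < 1). { apply Rmult_lt_reg_r with (4 * x + 1). lra. unfold Rdiv. rewrite Rmult_assoc, Rinv_l by lra. lra. }
   nra. }
 lra.
Qed.

Definition circ (H : C -> C) (c : C) (rho : R) : C :=
  CI (fun th => (H (c + RtoC rho * E th) * (RtoC rho * (Ci * E th)))%C) 0 (2 * PI).

Lemma E_0 : E 0 = 1%C.
Proof. unfold E. rewrite cos_0, sin_0. reflexivity. Qed.

Lemma E_2PI : E (2 * PI) = E 0.
Proof. unfold E. rewrite cos_2PI, sin_2PI, cos_0, sin_0. reflexivity. Qed.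

Lemma E_add a b : (E a * E b)%C = E (a + b).
Proof. unfold E, Cmult. simpl. rewrite cos_plus, sin_plus. f_equal; ring. Qed.

Lemma E_conj a : Cconj (E a) = E (- a).
Proof. unfold E, Cconj. simpl. rewrite cos_neg, sin_neg. reflexivity. Qed.

Lemma E_neq0 a : E a <> 0%C.
Proof. intros H. pose proof (Cmod_E a). rewrite H, Cmod_0 in H0. lra. Qed.

Lemma E_inv a : (/ E a)%C = E (- a).
Proof. assert (K: (E a * E (- a))%C = 1%C) by (rewrite E_add, Rplus_opp_r; apply E_0).
 pose proof (E_neq0 a). transitivity (/ E a * (E a * E (- a)))%C. rewrite K; ring. field. auto. Qed.

Lemma circ_family (H : C -> C) c0 c1 r0 r1 :
  (forall t th, 0 <= t <= 1 -> 0 <= th <= 2 * PI -> exists l, Cdiff H (Gam (Fam c0 c1 r0 r1) t th) l) ->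
  circ H c0 r0 = circ H (c0 + c1) (r0 + r1).
Proof. intros HD. set (p := Fam c0 c1 r0 r1).
 assert (HPI : 0 <= 2 * PI) by (pose proof PI_RGT_0; lra).
 pose proof (goursat p H 0 1 0 (2 * PI) ltac:(lra) HPI HD) as Z.
 unfold Q in Z.
 assert (E1 : CI (ftt p H (2 * PI)) 0 1 = CI (ftt p H 0) 0 1).
 { apply CI_ext; [|lra]. intros x _. unfold ftt, Gam, Gt. rewrite E_2PI. reflexivity. }
 rewrite E1 in Z.
 assert (E2 : CI (fth p H 1) 0 (2 * PI) = circ H (c0 + c1) (r0 + r1)).
 { unfold circ. apply CI_ext; auto. intros x _. unfold fth, Gam, Gth; simpl.
   replace (r0 + r1 * 1) with (r0 + r1) by ring. f_equal. f_equal. rewrite Cmult_1_r. reflexivity. }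
 assert (E3 : CI (fth p H 0) 0 (2 * PI) = circ H c0 r0).
 { unfold circ. apply CI_ext; auto. intros x _. unfold fth, Gam, Gth; simpl.
   replace (r0 + r1 * 0) with r0 by ring. f_equal. f_equal. rewrite Cmult_0_r, Cplus_0_r. reflexivity. }
 rewrite E2, E3 in Z.
 replace (circ H c0 r0) with (circ H c0 r0 + 0)%C by ring. rewrite <- Z. ring.
Qed.

Definition Hol (G : C -> C) := forall z, Cmod z < 1 -> exists l, Cdiff G z l.

Lemma RtoC_neq0 (x : R) : x <> 0 -> RtoC x <> 0%C.
Proof. intros H K. apply H. injection K. auto. Qed.

Lemma Ci_neq0 : Ci <> 0%C.
Proof. intros K. injection K. lra. Qed.

Lemma E_pow a n : (E a ^ n)%C = E (INR n * a).
Proof. induction n. simpl. rewrite Rmult_0_l, E_0. reflexivity.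
 rewrite Cpow_S, IHn, E_add, S_INR. f_equal; ring. Qed.

Lemma Cdiff_pow f z l n : Cdiff f z l -> exists l', Cdiff (fun w => Cpow (f w) n) z l'.
Proof. intros Hf. induction n.
 - exists 0%C. simpl. apply Cdiff_const.
 - destruct IHn as [l' Hl']. eexists. simpl. apply (Cdiff_mult f (fun w => Cpow (f w) n)); eauto. Qed.

Lemma Cdiff_invw (z : C) : z <> 0%C -> exists l, Cdiff (fun w => (/ w)%C) z l.
Proof. intros Hz. eexists. eapply Cdiff_ext. 2: apply (Cdiff_inv 0%C z Hz).
 intros w. simpl. f_equal. ring. Qed.

Lemma CI_const c a b : a <= b -> CI (fun _ => c) a b = (RtoC (b - a) * c)%C.
Proof. intros Hab. unfold CI. rewrite !RInt_const. unfold scal; simpl; unfold mult; simpl.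
 destruct c; unfold RtoC, Cmult, Re, Im; simpl. f_equal; ring. Qed.

Lemma CC_G_circle G c rho th : Hol G -> 0 <= rho -> Cmod c + rho < 1 ->
  CC (fun x => G (c + RtoC rho * E x)%C) th.
Proof. intros HG Hr Hc. apply (continuous_comp (fun x => (c + RtoC rho * E x)%C) G).
 - apply Ccont_plus. apply Ccont_const. apply Ccont_mult. apply Ccont_const. apply Ccont_E.
 - destruct (HG (c + RtoC rho * E th)%C) as [l Hl].
   + eapply Rle_lt_trans. apply Cmod_triangle. rewrite Cmod_mult, Cmod_E, Cmod_R, Rabs_right; lra.
   + eapply Cdiff_cont; eauto. Qed.

Definition Jr G (x rho : R) : C := CI (fun th => (G (RtoC rho * E th) * E (x * th))%C) 0 (2 * PI).

Lemma twoPI_pos : 0 < 2 * PI.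
Proof. pose proof PI_RGT_0. lra. Qed.

Lemma Ccont_G_E G rho x : Hol G -> 0 <= rho < 1 ->
  Ccont (fun th => (G (RtoC rho * E th) * E (x * th))%C) 0 (2 * PI).
Proof. intros HG Hr th _. apply Ccont_mult.
 - eapply continuous_ext. 2: apply (CC_G_circle G 0%C rho th HG); [|rewrite Cmod_0; lra]; lra.
   intros y. simpl. f_equal. ring.
 - apply (continuous_comp (fun t => x * t) E). 
   apply (@continuous_scal_r R_UniformSpace R_AbsRing R_NormedModule x (fun t => t)). apply continuous_id.
   apply Ccont_E. Qed.

(* negative-index coefficients vanish *)
Lemma Jr_pos_zero G m rho : Hol G -> (1 <= m)%nat -> 0 < rho < 1 -> Jr G (INR m) rho = 0%C.
Proof. intros HG Hm Hr.
 set (H := fun w => (G w * Cpow w (m - 1))%C).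
 assert (HH : forall w, Cmod w < 1 -> exists l, Cdiff H w l).
 { intros w Hw. destruct (HG w Hw) as [l1 H1]. destruct (Cdiff_pow (fun w => w) w 1%C (m - 1) (Cdiff_id w)) as [l2 H2].
   eexists. apply Cdiff_mult; eauto. }
 assert (HF : forall t th, 0 <= t <= 1 -> 0 <= th <= 2 * PI -> exists l, Cdiff H (Gam (Fam 0%C 0%C 0 rho) t th) l).
 { intros t th Ht Hth. apply HH. unfold Gam; simpl.
   rewrite Cmult_0_l, !Cplus_0_l, Cmod_mult, Cmod_E, Cmod_R. rewrite Rplus_0_l, Rmult_1_r.
   rewrite Rabs_right by nra. nra. }
 pose proof (circ_family H 0%C 0%C 0 rho HF) as C1.
 rewrite Cplus_0_l, Rplus_0_l in C1.
 assert (Z0 : circ H 0%C 0 = 0%C).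
 { unfold circ. pose proof twoPI_pos.
   transitivity (CI (fun _ => 0%C) 0 (2 * PI)).
   - apply CI_ext; [|lra]. intros; simpl. ring.
   - rewrite CI_const by lra. ring. }
 assert (Z1 : circ H 0%C rho = (Ci * RtoC (rho ^ m) * Jr G (INR m) rho)%C).
 { unfold circ, Jr. rewrite <- CI_scal. 2: pose proof twoPI_pos; lra.
   2: apply Ccont_G_E; auto; lra.
   apply CI_ext. 2: pose proof twoPI_pos; lra. intros th _. unfold H.
   rewrite Cplus_0_l. rewrite Cpow_mult_l, E_pow, <- RtoC_pow.
   assert (K1 : INR m * th = INR (m - 1) * th + th).
   { replace m with (S (m - 1)) at 1 by lia. rewrite S_INR. ring. }
   assert (K2 : rho ^ m = rho ^ (m - 1) * rho).
   { replace m with (S (m - 1)) at 1 by lia. simpl. ring. }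
   rewrite K1, K2, <- E_add, RtoC_mult. ring. }
 rewrite Z0, Z1 in C1.
 assert (Hne : (Ci * RtoC (rho ^ m))%C <> 0%C).
   { apply Cmult_neq_0; intros K; apply (f_equal Cmod) in K; rewrite ?Cmod_Ci, ?Cmod_R, ?Cmod_0, ?Rabs_R0 in K. lra.
     assert (0 < rho ^ m) by (apply pow_lt; lra). rewrite Rabs_right in K by lra; lra. }
   symmetry in C1. apply (f_equal (fun u => (/ (Ci * RtoC (rho ^ m)) * u)%C)) in C1.
   rewrite Cmult_0_r in C1. rewrite <- C1. field.
split. apply RtoC_neq0, pow_nonzero; lra. apply Ci_neq0. Qed.

Lemma inv_rhoE rho th : 0 < rho -> (/ (RtoC rho * E th))%C = (RtoC (/ rho) * E (- th))%C.
Proof. intros Hr. rewrite <- E_inv. rewrite RtoC_inv by lra. field. split. apply E_neq0. apply RtoC_neq0; lra. Qed.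

Lemma Jr_neg_scale G n r1 r2 : Hol G -> 0 < r1 < 1 -> 0 < r2 < 1 ->
  (Jr G (- INR n) r1 * RtoC (r2 ^ n))%C = (Jr G (- INR n) r2 * RtoC (r1 ^ n))%C.
Proof. intros HG H1 H2.
 set (H := fun w => (G w * Cpow (/ w) (S n))%C).
 assert (HH : forall w, Cmod w < 1 -> w <> 0%C -> exists l, Cdiff H w l).
 { intros w Hw Hw0. destruct (HG w Hw) as [l1 L1]. destruct (Cdiff_invw w Hw0) as [l2 L2].
   destruct (Cdiff_pow (fun w => (/ w)%C) w l2 (S n) L2) as [l3 L3].
   eexists. apply Cdiff_mult; eauto. }
 assert (HF : forall t th, 0 <= t <= 1 -> 0 <= th <= 2 * PI -> exists l, Cdiff H (Gam (Fam 0%C 0%C r1 (r2 - r1)) t th) l).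
 { intros t th Ht Hth. 
   assert (Hg : Gam (Fam 0%C 0%C r1 (r2 - r1)) t th = (RtoC (r1 + (r2 - r1) * t) * E th)%C).
   { unfold Gam; simpl. ring. }
   assert (0 < r1 + (r2 - r1) * t < 1).
   { assert (0 <= r1 * (1 - t)) by (apply Rmult_le_pos; lra).
     assert (0 <= r2 * t) by (apply Rmult_le_pos; lra).
     destruct (Req_dec t 1) as [->|Ht1]. lra.
     assert (0 < (1 - t) * (1 - r1)) by (apply Rmult_lt_0_compat; lra).
     assert (0 <= t * (1 - r2)) by (apply Rmult_le_pos; lra).
     split. assert (0 < r1 * (1 - t)) by (apply Rmult_lt_0_compat; lra). lra. lra. }
   rewrite Hg. apply HH.
   - rewrite Cmod_mult, Cmod_E, Cmod_R, Rabs_right; lra.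
   - apply Cmult_neq_0. apply RtoC_neq0; lra. apply E_neq0. }
 pose proof (circ_family H 0%C 0%C r1 (r2 - r1) HF) as C1.
 replace (r1 + (r2 - r1)) with r2 in C1 by ring. rewrite Cplus_0_l in C1.
 assert (Z : forall rho, 0 < rho < 1 -> circ H 0%C rho = (Ci * RtoC ((/ rho) ^ n) * Jr G (- INR n) rho)%C).
 { intros rho Hr. unfold circ, Jr. rewrite <- CI_scal. 2: pose proof twoPI_pos; lra.
   2: apply Ccont_G_E; auto; lra.
   apply CI_ext. 2: pose proof twoPI_pos; lra. intros th _. unfold H.
   rewrite Cplus_0_l, inv_rhoE by lra. rewrite Cpow_mult_l, E_pow, <- RtoC_pow.
   assert (K1 : INR (S n) * - th = - INR n * th + (- th)).
   { rewrite S_INR. ring. }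
   rewrite K1, <- E_add. simpl pow. rewrite !RtoC_mult.
   assert (K2 : (E (- th) * E th)%C = 1%C) by (rewrite E_add, Rplus_opp_l; apply E_0).
   transitivity ((Ci * ((/ rho) ^ n)%R * (G (RtoC rho * E th) * E (- INR n * th))) * (RtoC (/ rho) * RtoC rho) * (E (- th) * E th))%C.
   ring. rewrite K2, <- RtoC_mult, Rinv_l by lra. ring. }
 rewrite (Z r1 H1), (Z r2 H2) in C1.
 assert (P1 : (RtoC ((/ r1) ^ n) * RtoC (r1 ^ n))%C = 1%C).
 { rewrite <- RtoC_mult, <- Rpow_mult_distr, Rinv_l by lra. rewrite pow1. reflexivity. }
 assert (P2 : (RtoC ((/ r2) ^ n) * RtoC (r2 ^ n))%C = 1%C).
 { rewrite <- RtoC_mult, <- Rpow_mult_distr, Rinv_l by lra. rewrite pow1. reflexivity. }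
 apply (f_equal (fun u => (u * RtoC (r1 ^ n) * RtoC (r2 ^ n) / Ci)%C)) in C1.
 transitivity (Jr G (- INR n) r1 * RtoC (r2 ^ n) * (RtoC ((/ r1) ^ n) * RtoC (r1 ^ n)) * (Ci / Ci))%C.
 { rewrite P1. field. apply Ci_neq0. }
 transitivity (Ci * ((/ r1) ^ n)%R * Jr G (- INR n) r1 * (r1 ^ n)%R * (r2 ^ n)%R / Ci)%C.
 { field. apply Ci_neq0. }
 rewrite C1.
 transitivity (Jr G (- INR n) r2 * RtoC (r1 ^ n) * (RtoC ((/ r2) ^ n) * RtoC (r2 ^ n)) * (Ci / Ci))%C.
 { field. apply Ci_neq0. }
 rewrite P2. field. apply Ci_neq0.
Qed.

Fixpoint csum (f : nat -> C) (N : nat) : C :=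
  match N with O => 0%C | S N => (csum f N + f N)%C end.

Lemma Ccont_csum (f : nat -> R -> C) a b N : (forall k, Ccont (f k) a b) ->
  Ccont (fun t => csum (fun k => f k t) N) a b.
Proof. intros Hf x Hx. induction N; simpl. apply Ccont_const.
 apply Ccont_plus; auto. apply Hf; auto. Qed.

Lemma CI_csum (f : nat -> R -> C) a b N : a <= b -> (forall k, Ccont (f k) a b) ->
  CI (fun t => csum (fun k => f k t) N) a b = csum (fun k => CI (f k) a b) N.
Proof. intros Hab Hf. induction N; simpl.
 - rewrite CI_const by auto. ring.
 - rewrite CI_plus; auto. rewrite IHN. reflexivity. apply Ccont_csum; auto. Qed.

Lemma geom (q : C) N : ((1 - q) * csum (fun k => Cpow q k) N)%C = (1 - Cpow q N)%C.
Proof. induction N; simpl. ring. rewrite Cmult_plus_distr_l, IHN. ring. Qed.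

Lemma Cmod_rev (a b : C) : Cmod b - Cmod a <= Cmod (a + b).
Proof. pose proof (Cmod_triangle (a + b) (- a)). replace (a + b + - a)%C with b in H by ring.
 rewrite Cmod_opp in H. lra. Qed.

Lemma Cdiff_cont_ed G z l : Cdiff G z l -> forall eps, 0 < eps -> exists del, 0 < del /\
  forall w, Cmod (w - z) < del -> Cmod (G w - G z) <= eps.
Proof. intros HD eps Heps. destruct (HD 1 Rlt_0_1) as [d [Hd Hb]].
 assert (Hl : 0 < Cmod l + 1) by (pose proof (Cmod_ge_0 l); lra).
 exists (Rmin d (eps / (Cmod l + 1))). split. apply Rmin_glb_lt; auto. apply Rdiv_lt_0_compat; auto.
 intros w Hw. assert (W1 : Cmod (w - z) < d) by (eapply Rlt_le_trans; [apply Hw|apply Rmin_l]).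
 assert (W2 : Cmod (w - z) < eps / (Cmod l + 1)) by (eapply Rlt_le_trans; [apply Hw|apply Rmin_r]).
 specialize (Hb w W1).
 replace (G w - G z)%C with ((G w - G z - l * (w - z)) + l * (w - z))%C by ring.
 eapply Rle_trans. apply Cmod_triangle. rewrite Cmod_mult.
 assert (Cmod (w - z) * (Cmod l + 1) <= eps).
 { apply (Rmult_lt_compat_r (Cmod l + 1)) in W2; auto. unfold Rdiv in W2. rewrite Rmult_assoc, Rinv_l in W2; lra. }
 pose proof (Cmod_ge_0 (w - z)). nra. Qed.

Lemma Ccont_inv (f : R -> C) x : CC f x -> f x <> 0%C -> CC (fun t => (/ f t)%C) x.
Proof. intros Hf H0. apply (continuous_comp f (fun w => (/ w)%C)); auto.
 destruct (Cdiff_invw (f x) H0) as [l Hl]. eapply Cdiff_cont; eauto. Qed.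

Lemma bound_circle (f : R -> C) a b : a <= b -> (forall x, a <= x <= b -> CC f x) ->
  exists M, forall x, a <= x <= b -> Cmod (f x) <= M.
Proof. intros Hab Hf.
 destruct (continuity_ab_maj (fun x => Rabs (Re (f x)) + Rabs (Im (f x))) a b Hab) as [m [Hm _]].
 { intros c Hc. apply (continuity_pt_plus (fun x => Rabs (Re (f x))) (fun x => Rabs (Im (f x)))).
   - apply (continuity_pt_comp (fun x => Re (f x)) Rabs). apply continuity_pt_filterlim.
     apply cont_Re, Hf; auto. apply Rcontinuity_abs.
   - apply (continuity_pt_comp (fun x => Im (f x)) Rabs). apply continuity_pt_filterlim.
     apply cont_Im, Hf; auto. apply Rcontinuity_abs. }
 exists (Rabs (Re (f m)) + Rabs (Im (f m))). intros x Hx. eapply Rle_trans. apply Cmod_le_parts. apply Hm; auto. Qed.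

Lemma Cminus_eq_0_gen (a b : C) : (a - b)%C = 0%C -> a = b.
Proof. intros H. replace a with ((a - b) + b)%C by ring. rewrite H. ring. Qed.

Lemma Cmod_small (D : C) (C0 : R) : 0 < C0 -> (forall eps, 0 < eps -> Cmod D <= C0 * eps) -> D = 0%C.
Proof. intros HC H. apply Cmod_eq_0. pose proof (Cmod_ge_0 D).
 destruct (Req_dec (Cmod D) 0); auto. exfalso.
 specialize (H (Cmod D / (2 * C0)) ltac:(apply Rdiv_lt_0_compat; lra)).
 replace (C0 * (Cmod D / (2 * C0))) with (Cmod D / 2) in H by (field; lra). lra. Qed.

Definition Hz (G : C -> C) (z : C) := fun w => (G w * / (w - z))%C.

Lemma cauchy_formula G z rho : Hol G -> Cmod z < rho < 1 ->
  circ (Hz G z) 0%C rho = (RtoC (2 * PI) * Ci * G z)%C.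
Proof. intros HG Hr. pose proof twoPI_pos as HP.
 assert (Hz0 : 0 <= Cmod z) by apply Cmod_ge_0.
 assert (FAM : forall s, 0 < s -> Cmod z + s < 1 -> circ (Hz G z) z s = circ (Hz G z) 0%C rho).
 { intros s Hs Hzs.
   assert (HF : forall t th, 0 <= t <= 1 -> 0 <= th <= 2 * PI ->
      exists l, Cdiff (Hz G z) (Gam (Fam z (- z) s (rho - s)) t th) l).
   { intros t th Ht Hth. set (w := Gam (Fam z (- z) s (rho - s)) t th).
     assert (Hw1 : (w - z)%C = (- z * RtoC t + RtoC (s + (rho - s) * t) * E th)%C) by (unfold w, Gam; simpl; ring).
     assert (Hw2 : w = (z * RtoC (1 - t) + RtoC (s + (rho - s) * t) * E th)%C).
     { unfold w, Gam; simpl. rewrite RtoC_minus. ring. }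
     assert (Hrt : 0 <= s + (rho - s) * t).
     { assert (0 <= s * (1 - t)) by (apply Rmult_le_pos; lra). assert (0 <= rho * t) by (apply Rmult_le_pos; lra). nra. }
     assert (Hwm : Cmod w < 1).
     { rewrite Hw2. eapply Rle_lt_trans. apply Cmod_triangle.
       rewrite !Cmod_mult, Cmod_E, !Cmod_R, Rmult_1_r, (Rabs_right (1 - t)), (Rabs_right (s + _)) by lra.
       destruct (Req_dec t 1) as [->|Ht1]. nra.
       assert (0 < 1 - t) by lra.
       assert ((Cmod z + s) * (1 - t) < 1 * (1 - t)) by (apply Rmult_lt_compat_r; lra).
       assert (rho * t <= 1 * t) by (apply Rmult_le_compat_r; lra). nra. }
     assert (Hwz : w <> z).
     { intros K. assert (K2 : (w - z)%C = 0%C) by (rewrite K; ring). rewrite Hw1 in K2.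
       pose proof (Cmod_rev (- z * RtoC t) (RtoC (s + (rho - s) * t) * E th)) as R.
       rewrite K2, Cmod_0, !Cmod_mult, Cmod_opp, Cmod_E, !Cmod_R, Rmult_1_r, (Rabs_right t), (Rabs_right (s + _)) in R by lra.
       destruct (Req_dec t 1) as [->|Ht1]. lra.
       assert (0 < s * (1 - t)) by (apply Rmult_lt_0_compat; lra).
       assert (Cmod z * t <= rho * t) by (apply Rmult_le_compat_r; lra). nra. }
     destruct (HG w Hwm) as [l1 L1].
     assert (Hwz' : w <> z) by auto.
     pose proof (Cdiff_inv z w Hwz') as L2.
     eexists. unfold Hz. apply Cdiff_mult; eauto. }
   pose proof (circ_family (Hz G z) z (- z) s (rho - s) HF) as C1.
   rewrite Cplus_opp_r in C1. replace (s + (rho - s)) with rho in C1 by ring. auto. }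
 assert (SMALL : forall s, 0 < s -> Cmod z + s < 1 -> circ (Hz G z) z s = (Ci * CI (fun th => G (z + RtoC s * E th)%C) 0 (2 * PI))%C).
 { intros s Hs Hzs. unfold circ, Hz. rewrite <- CI_scal.
   - apply CI_ext; [|lra]. intros th _. 
     replace (z + RtoC s * E th - z)%C with (RtoC s * E th)%C by ring.
     field. split. apply E_neq0. apply RtoC_neq0; lra.
   - lra.
   - intros th _. apply CC_G_circle; auto; lra. }
 apply Cminus_eq_0_gen.
 apply Cmod_small with (C0 := 2 * PI); auto. intros eps Heps.
 destruct (HG z ltac:(lra)) as [l Hl].
 destruct (Cdiff_cont_ed G z l Hl eps Heps) as [del [Hdel Hb]].
 set (s := Rmin (del / 2) ((1 - Cmod z) / 2)).
 assert (Hs : 0 < s) by (apply Rmin_glb_lt; lra).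
 assert (Hs1 : s < del) by (eapply Rle_lt_trans; [apply Rmin_l| lra]).
 assert (Hs2 : Cmod z + s < 1) by (assert (s <= (1 - Cmod z) / 2) by apply Rmin_r; lra).
 rewrite <- (FAM s Hs Hs2), (SMALL s Hs Hs2).
 replace (RtoC (2 * PI) * Ci * G z)%C with (Ci * CI (fun _ => G z) 0 (2 * PI))%C.
 2: { rewrite CI_const by lra. rewrite Rminus_0_r. ring. }
 replace (Ci * CI (fun th : R => G (z + RtoC s * E th)%C) 0 (2 * PI) - Ci * CI (fun _ : R => G z) 0 (2 * PI))%C
   with (Ci * (CI (fun th : R => G (z + RtoC s * E th)%C) 0 (2 * PI) - CI (fun _ : R => G z) 0 (2 * PI)))%C by ring.
 rewrite Cmod_mult, Cmod_Ci, Rmult_1_l.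
 rewrite <- CI_minus; try lra.
 - replace (2 * PI * eps) with (eps * (2 * PI - 0)) by ring.
   apply CI_bound; try lra.
   + intros x Hx. apply Ccont_plus. apply CC_G_circle; auto; lra.
     eapply continuous_ext. 2: apply (Ccont_mult (fun _ => RtoC (-1)) (fun _ => G z)); apply Ccont_const.
     intros t; simpl. ring.
   + intros x Hx. apply Hb. replace (z + RtoC s * E x - z)%C with (RtoC s * E x)%C by ring.
     rewrite Cmod_mult, Cmod_E, Cmod_R, Rabs_right; lra.
 - intros x Hx. apply CC_G_circle; auto; lra.
 - intros x Hx. apply Ccont_const.
Qed.

Lemma csum_ext f g N : (forall k, f k = g k) -> csum f N = csum g N.
Proof. intros H. induction N; simpl; auto. rewrite IHN, H. auto. Qed.

Lemma csum_mult_l c f N : (c * csum f N)%C = csum (fun k => c * f k)%C N.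
Proof. induction N; simpl. ring. rewrite <- IHN. ring. Qed.

Lemma expand (G : C -> C) (z : C) (rho : R) (N : nat) (M : R) : Hol G -> Cmod z < rho < 1 ->
  (forall th, 0 <= th <= 2 * PI -> Cmod (G (RtoC rho * E th)%C) <= M) ->
  Cmod (RtoC (2 * PI) * G z - csum (fun k => Cpow (z * RtoC (/ rho)) k * Jr G (- INR k) rho) N)%C
    <= (M * (Cmod z / rho) ^ N / (1 - Cmod z / rho)) * (2 * PI - 0).
Proof. intros HG Hr HM. pose proof twoPI_pos as HP.
 assert (Hz0 : 0 <= Cmod z) by apply Cmod_ge_0.
 assert (Hrho : 0 < rho) by lra.
 set (q0 := Cmod z / rho).
 assert (Hq0 : 0 <= q0 < 1).
 { unfold q0. split. apply Rdiv_le_0_compat; lra. apply Rmult_lt_reg_r with rho; auto.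
   unfold Rdiv. rewrite Rmult_assoc, Rinv_l; lra. }
 set (gE := fun th => G (RtoC rho * E th)%C).
 set (qf := fun th => (z * RtoC (/ rho) * E (- th))%C).
 assert (Hqf : forall th, Cmod (qf th) = q0).
 { intros th. unfold qf, q0. rewrite !Cmod_mult, Cmod_E, Cmod_R, Rabs_right. field. lra.
   apply Rle_ge, Rlt_le, Rinv_0_lt_compat; auto. }
 assert (Hqf1 : forall th, (1 - qf th)%C <> 0%C).
 { intros th K. apply (f_equal Cmod) in K. rewrite Cmod_0 in K.
   pose proof (Cmod_rev (- qf th) 1). rewrite Cmod_opp, Hqf, Cmod_1 in H.
   replace (- qf th + 1)%C with (1 - qf th)%C in H by ring. lra. }
 set (term := fun k th => (Cpow (z * RtoC (/ rho)) k * (gE th * E (- INR k * th)))%C).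
 set (rem := fun th => (gE th * Cpow (qf th) N * / (1 - qf th))%C).
 assert (CgE : forall th, CC gE th).
 { intros th. unfold gE. eapply continuous_ext. 2: apply (CC_G_circle G 0%C rho th HG); [lra|rewrite Cmod_0; lra].
   intros y; simpl. f_equal. ring. }
 assert (Cqf : forall th, CC qf th).
 { intros th. unfold qf. apply Ccont_mult. apply Ccont_const.
   apply (continuous_comp (fun t => - t) E). 
   apply (@continuous_opp R_UniformSpace R_AbsRing R_NormedModule (fun t => t)). apply continuous_id.
   apply Ccont_E. }
 assert (Cterm : forall k, Ccont (term k) 0 (2 * PI)).
 { intros k th _. unfold term. apply Ccont_mult. apply Ccont_const. apply Ccont_mult; auto.
   apply (continuous_comp (fun t => - INR k * t) E).
   apply (@continuous_scal_r R_UniformSpace R_AbsRing R_NormedModule (- INR k) (fun t => t)). apply continuous_id.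
   apply Ccont_E. }
 assert (Crem : Ccont rem 0 (2 * PI)).
 { intros th _. unfold rem. apply Ccont_mult. apply Ccont_mult; auto.
   clear -Cqf. induction N; simpl. apply Ccont_const. apply Ccont_mult; auto.
   apply Ccont_inv; auto. apply Ccont_plus. apply Ccont_const.
   eapply continuous_ext. 2: apply (Ccont_mult (fun _ => RtoC (-1)) qf); [apply Ccont_const | auto].
   intros t; simpl. ring. }
 assert (PW : forall th, (Hz G z (0 + RtoC rho * E th) * (RtoC rho * (Ci * E th)))%C =
                         (Ci * (csum (fun k => term k th) N + rem th))%C).
 { intros th. unfold Hz. rewrite Cplus_0_l. fold (gE th).
   assert (K1 : (RtoC rho * E th - z)%C = (RtoC rho * E th * (1 - qf th))%C).
   { unfold qf. transitivity (RtoC rho * E th - z * (RtoC rho * RtoC (/ rho)) * (E th * E (- th)))%C.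
     rewrite <- RtoC_mult, Rinv_r by lra. rewrite E_add, Rplus_opp_r, E_0. ring. ring. }
   assert (K2 : csum (fun k => term k th) N = (gE th * csum (fun k => Cpow (qf th) k) N)%C).
   { rewrite csum_mult_l. apply csum_ext. intros k. unfold term, qf.
     rewrite (Cpow_mult_l (z * RtoC (/ rho)) (E (- th)) k), E_pow. replace (INR k * - th) with (- INR k * th) by ring. ring. }
   rewrite K2. 
   assert (K3 : csum (fun k => Cpow (qf th) k) N = ((1 - Cpow (qf th) N) / (1 - qf th))%C).
   { pose proof (geom (qf th) N) as Gm. rewrite <- Gm. field. auto. }
   rewrite K3, K1. unfold rem. field. split; auto. split. apply E_neq0. apply RtoC_neq0; lra. }
 pose proof (cauchy_formula G z rho HG Hr) as CA. unfold circ in CA.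
 rewrite (CI_ext _ (fun th => (Ci * (csum (fun k => term k th) N + rem th))%C)) in CA by (auto; lra).
 rewrite CI_scal, CI_plus, CI_csum in CA; try lra; auto.
 2: { apply Ccont_csum; auto. }
 2: { intros th Hth. apply Ccont_plus. apply (Ccont_csum term 0 (2 * PI) N Cterm th Hth). apply Crem; auto. }
 assert (TJ : forall k, CI (term k) 0 (2 * PI) = (Cpow (z * RtoC (/ rho)) k * Jr G (- INR k) rho)%C).
 { intros k. unfold term. rewrite CI_scal. reflexivity. lra. apply Ccont_G_E; auto; lra. }
 rewrite (csum_ext _ _ N TJ) in CA.
 assert (EQ : (RtoC (2 * PI) * G z - csum (fun k => Cpow (z * RtoC (/ rho)) k * Jr G (- INR k) rho) N)%C
              = CI rem 0 (2 * PI)).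
 { match type of CA with (Ci * ?X)%C = _ => assert (XX : X = (RtoC (2 * PI) * G z)%C) end.
   { apply (f_equal (fun u => (/ Ci * u)%C)) in CA.
     rewrite Cmult_assoc, Cinv_l, Cmult_1_l in CA by apply Ci_neq0. rewrite CA. field. apply Ci_neq0. }
   rewrite <- XX. ring. }
 rewrite EQ. apply CI_bound; try lra; auto.
 intros th Hth. unfold rem. rewrite !Cmod_mult, Cmod_pow, Hqf, Cmod_inv by auto.
 assert (L : 1 - q0 <= Cmod (1 - qf th)).
 { pose proof (Cmod_rev (- qf th) 1). rewrite Cmod_opp, Hqf, Cmod_1 in H.
   replace (- qf th + 1)%C with (1 - qf th)%C in H by ring. lra. }
 assert (0 <= q0 ^ N) by (apply pow_le; lra).
 assert (Cmod (gE th) <= M) by (apply HM; auto).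
 assert (0 <= Cmod (gE th)) by apply Cmod_ge_0.
 unfold Rdiv. apply Rmult_le_compat; try apply Rmult_le_pos; try lra.
 left. apply Rinv_0_lt_compat. lra.
 apply Rmult_le_compat_r; lra.
 apply Rinv_le_contravar; lra.
Qed.

Definition acoef G k := (Jr G (- INR k) (1/2) * RtoC (2 ^ k))%C.

Lemma Jr_coef G k rho : Hol G -> 0 < rho < 1 -> Jr G (- INR k) rho = (acoef G k * RtoC (rho ^ k))%C.
Proof. intros HG Hr. pose proof (Jr_neg_scale G k (1/2) rho HG ltac:(lra) Hr) as S.
 unfold acoef. 
 assert (P : (RtoC ((1/2) ^ k) * RtoC (2 ^ k))%C = 1%C).
 { rewrite <- RtoC_mult, <- Rpow_mult_distr. replace (1/2 * 2) with 1 by field. rewrite pow1. reflexivity. }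
 transitivity (Jr G (- INR k) rho * (RtoC ((1/2) ^ k) * RtoC (2 ^ k)))%C. rewrite P; ring.
 transitivity (Jr G (- INR k) rho * RtoC ((1/2) ^ k) * RtoC (2 ^ k))%C. ring.
 rewrite <- S. ring. Qed.

Lemma series G z : Hol G -> Cmod z < 1 -> forall eps, 0 < eps -> exists N0, forall N, (N0 <= N)%nat ->
  Cmod (RtoC (2 * PI) * G z - csum (fun k => acoef G k * Cpow z k) N)%C <= eps.
Proof. intros HG Hz eps Heps. pose proof twoPI_pos as HP.
 assert (Hz0 : 0 <= Cmod z) by apply Cmod_ge_0.
 set (rho := (1 + Cmod z) / 2).
 assert (Hr : Cmod z < rho < 1) by (unfold rho; lra).
 destruct (bound_circle (fun th => G (RtoC rho * E th)%C) 0 (2 * PI)) as [M HM]. lra.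
 { intros th _. eapply continuous_ext. 2: apply (CC_G_circle G 0%C rho th HG); [lra|rewrite Cmod_0; lra].
   intros y; simpl. f_equal. ring. }
 assert (HM0 : 0 <= M) by (pose proof (HM 0 ltac:(lra)) as K; cbv beta in K; pose proof (Cmod_ge_0 (G (RtoC rho * E 0)%C)); lra).
 set (q0 := Cmod z / rho).
 assert (Hq0 : 0 <= q0 < 1).
 { unfold q0. split. apply Rdiv_le_0_compat; lra. apply Rmult_lt_reg_r with rho; [lra|].
   unfold Rdiv. rewrite Rmult_assoc, Rinv_l; lra. }
 set (y := eps * (1 - q0) / ((M + 1) * (2 * PI))).
 assert (Hy : 0 < y).
 { unfold y. apply Rdiv_lt_0_compat. apply Rmult_lt_0_compat; lra. apply Rmult_lt_0_compat; lra. }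
 destruct (pow_lt_1_zero q0 ltac:(rewrite Rabs_right; lra) y Hy) as [N0 HN0].
 exists N0. intros N HN.
 pose proof (expand G z rho N M HG Hr HM) as EX. fold q0 in EX.
 rewrite (csum_ext _ (fun k => acoef G k * Cpow z k)%C) in EX.
 2: { intros k. rewrite Jr_coef; [|exact HG|lra]. rewrite Cpow_mult_l, <- RtoC_pow.
      transitivity (acoef G k * Cpow z k * RtoC ((/ rho) ^ k * rho ^ k))%C.
      rewrite RtoC_mult. ring. rewrite <- Rpow_mult_distr, Rinv_l by lra. rewrite pow1. ring. }
 eapply Rle_trans. exact EX.
 specialize (HN0 N HN). rewrite Rabs_right in HN0 by (apply Rle_ge, pow_le; lra).
 assert (0 <= q0 ^ N) by (apply pow_le; lra).
 apply Rle_trans with ((M + 1) * y / (1 - q0) * (2 * PI - 0)).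
 { apply Rmult_le_compat_r. lra. unfold Rdiv. apply Rmult_le_compat_r.
   left; apply Rinv_0_lt_compat; lra. apply Rmult_le_compat; lra. }
 right. unfold y. field. split; lra.
Qed.

Lemma Ccont_conj (f : R -> C) x : CC f x -> CC (fun t => Cconj (f t)) x.
Proof. intros H. apply Ccont_parts.
 - apply cont_Re in H. eapply continuous_ext; [|exact H]. intros; unfold Cconj; simpl; auto.
 - apply cont_Im in H. eapply continuous_ext.
   2: apply (@continuous_opp R_UniformSpace R_AbsRing R_NormedModule _ x H).
   intros; unfold Cconj; simpl; auto. Qed.

Lemma CI_conj f a b : a <= b -> Ccont f a b -> CI (fun t => Cconj (f t)) a b = Cconj (CI f a b).
Proof. intros Hab Hf. unfold CI, Cconj; simpl. f_equal.
 rewrite <- (RInt_opp (V := R_CompleteNormedModule)). apply RInt_ext. intros; simpl. reflexivity.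
 apply Ccont_exIm; auto. Qed.

Lemma CC_GE G rho x th : Hol G -> 0 <= rho < 1 -> CC (fun th => (G (RtoC rho * E th) * E (x * th))%C) th.
Proof. intros HG Hr. apply Ccont_mult.
 - eapply continuous_ext. 2: apply (CC_G_circle G 0%C rho th HG); [|rewrite Cmod_0; lra]; lra.
   intros y. simpl. f_equal. ring.
 - apply (continuous_comp (fun t => x * t) E). 
   apply (@continuous_scal_r R_UniformSpace R_AbsRing R_NormedModule x (fun t => t)). apply continuous_id.
   apply Ccont_E. Qed.

Definition phi (G : C -> C) (rho th : R) : R := Re ((1 - Cconj (RtoC rho * E th)) * G (RtoC rho * E th))%C.

Lemma RtoC_Re (w : C) : RtoC (Re w) = ((w + Cconj w) / 2)%C.
Proof. destruct w as [u v]. unfold RtoC, Re, Cconj, Cplus, Cdiv, Cmult, Cinv; simpl.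
 apply injective_projections; simpl; field. Qed.

Lemma CF_formula G rho x : Hol G -> 0 < rho < 1 ->
  CI (fun th => (RtoC (phi G rho th) * E (x * th))%C) 0 (2 * PI) =
  ((/ 2) * ((Jr G x rho - RtoC rho * Jr G (x - 1) rho) +
            Cconj (Jr G (- x) rho - RtoC rho * Jr G (- x - 1) rho)))%C.
Proof. intros HG Hr. pose proof twoPI_pos as HP.
 set (f := fun y th => (G (RtoC rho * E th) * E (y * th))%C).
 assert (Cf : forall y, Ccont (f y) 0 (2 * PI)) by (intros y th _; apply CC_GE; auto; lra).
 assert (PW : forall th, (RtoC (phi G rho th) * E (x * th))%C =
   ((/ 2) * ((f x th + (- RtoC rho) * f (x - 1)%R th) + Cconj (f (- x)%R th + (- RtoC rho) * f (- x - 1)%R th)))%C).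
 { intros th. unfold phi, f. rewrite RtoC_Re.
   set (g := G (RtoC rho * E th)%C).
   rewrite !Cplus_conj, !Cmult_conj, !Copp_conj, !E_conj, !Cminus_conj, !Cmult_conj, !E_conj.
   assert (R1 : Cconj (RtoC rho) = RtoC rho) by (unfold Cconj, RtoC; apply injective_projections; simpl; ring).
   assert (R2 : Cconj 1 = 1%C) by (unfold Cconj, RtoC; apply injective_projections; simpl; ring).
   rewrite R1, R2.
   assert (A1 : E ((x - 1) * th) = (E (x * th) * / E th)%C) by (rewrite E_inv, E_add; f_equal; ring).
   assert (A2 : E (- (- x * th)) = E (x * th)) by (f_equal; ring).
   assert (A3 : E (- ((- x - 1) * th)) = (E (x * th) * E th)%C) by (rewrite E_add; f_equal; ring).
   assert (A4 : E (- th) = (/ E th)%C) by (rewrite E_inv; auto).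
   rewrite A1, A2, A3, A4.
   pose proof (E_neq0 th). pose proof (E_neq0 (x * th)).
   rewrite ?R1, ?Ropp_involutive. field. auto. }
 rewrite (CI_ext _ _ 0 (2 * PI) (fun th _ => PW th)) by lra.
 rewrite CI_scal; try lra.
 2: { intros th _. apply Ccont_plus. apply Ccont_plus. apply CC_GE; auto; lra. apply Ccont_mult. apply Ccont_const. apply CC_GE; auto; lra.
      apply Ccont_conj. apply Ccont_plus. apply CC_GE; auto; lra. apply Ccont_mult. apply Ccont_const. apply CC_GE; auto; lra. }
 rewrite CI_plus; try lra.
 2: { intros th _. apply Ccont_plus. apply CC_GE; auto; lra. apply Ccont_mult. apply Ccont_const. apply CC_GE; auto; lra. }
 2: { intros th _. apply Ccont_conj. apply Ccont_plus. apply CC_GE; auto; lra. apply Ccont_mult. apply Ccont_const. apply CC_GE; auto; lra. }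
 rewrite CI_conj; try lra.
 2: { intros th _. apply Ccont_plus. apply CC_GE; auto; lra. apply Ccont_mult. apply Ccont_const. apply CC_GE; auto; lra. }
 rewrite !CI_plus; try lra; try apply Cf.
 2,3: intros th _; apply Ccont_mult; [apply Ccont_const | apply CC_GE; auto; lra].
 rewrite !CI_scal; try lra; try apply Cf.
 unfold Jr. fold (f x). fold (f (x - 1)). fold (f (- x)). fold (f (- x - 1)).
 replace (CI (f (- x)%R) 0 (2 * PI) + - RtoC rho * CI (f (- x - 1)%R) 0 (2 * PI))%C with (CI (f (- x)%R) 0 (2 * PI) - RtoC rho * CI (f (- x - 1)%R) 0 (2 * PI))%C by ring. ring.
Qed.

Lemma CC_phi G rho th : Hol G -> 0 <= rho < 1 -> continuous (fun t => phi G rho t) th.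
Proof. intros HG Hr. unfold phi. apply cont_Re. apply Ccont_mult.
 - apply Ccont_plus. apply Ccont_const.
   eapply continuous_ext. 2: apply (Ccont_mult (fun _ => RtoC (-1)) (fun t => Cconj (RtoC rho * E t))); [apply Ccont_const|].
   intros; simpl. ring. apply Ccont_conj. apply Ccont_mult. apply Ccont_const. apply Ccont_E.
 - eapply continuous_ext. 2: apply (CC_G_circle G 0%C rho th HG); [|rewrite Cmod_0; lra]; lra.
   intros y. simpl. f_equal. ring. Qed.

Lemma CF_bound G rho x : Hol G -> 0 < rho < 1 -> (forall th, Rabs (phi G rho th) <= 1 - rho ^ 2) ->
  Cmod (CI (fun th => (RtoC (phi G rho th) * E (x * th))%C) 0 (2 * PI)) <= (1 - rho ^ 2) * (2 * PI - 0).
Proof. intros HG Hr Hb. pose proof twoPI_pos. apply CI_bound; try lra.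
 - intros th _. apply Ccont_mult. apply Ccont_RtoC. apply CC_phi; auto; lra.
   apply (continuous_comp (fun t => x * t) E). 
   apply (@continuous_scal_r R_UniformSpace R_AbsRing R_NormedModule x (fun t => t)). apply continuous_id.
   apply Ccont_E.
 - intros th _. rewrite Cmod_mult, Cmod_E, Cmod_R, Rmult_1_r. auto. Qed.

Lemma limit_zero (T : C) (K : R) : (forall rho, 1/2 <= rho < 1 -> Cmod T <= K * (1 - rho)) -> T = 0%C.
Proof. intros H. apply Cmod_eq_0. pose proof (Cmod_ge_0 T).
 destruct (Req_dec (Cmod T) 0); auto. exfalso.
 set (d := Rmin (1/2) (Cmod T / (2 * (Rabs K + 1)))).
 assert (HK : 0 < Rabs K + 1) by (pose proof (Rabs_pos K); lra).
 assert (Hd : 0 < d) by (apply Rmin_glb_lt; [lra| apply Rdiv_lt_0_compat; lra]).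
 assert (Hd1 : d <= 1/2) by apply Rmin_l.
 assert (Hd2 : d <= Cmod T / (2 * (Rabs K + 1))) by apply Rmin_r.
 specialize (H (1 - d) ltac:(lra)). replace (1 - (1 - d)) with d in H by ring.
 assert (K * d <= Rabs K * d) by (apply Rmult_le_compat_r; [lra| apply Rle_abs]).
 assert (Rabs K * d <= Rabs K * (Cmod T / (2 * (Rabs K + 1)))) by (apply Rmult_le_compat_l; [apply Rabs_pos|lra]).
 assert (Rabs K * (Cmod T / (2 * (Rabs K + 1))) < Cmod T).
 { apply Rmult_lt_reg_r with (2 * (Rabs K + 1)). lra.
   unfold Rdiv. rewrite Rmult_assoc, (Rmult_assoc (Cmod T)), Rinv_l by lra. pose proof (Rabs_pos K). nra. }
 lra. Qed.

Lemma pow_le_1' rho m : 0 <= rho <= 1 -> rho ^ m <= 1.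
Proof. intros Hr. induction m. simpl; lra. simpl. assert (0 <= rho ^ m) by (apply pow_le; lra). nra. Qed.

Lemma one_minus_pow rho m : 0 <= rho <= 1 -> 0 <= 1 - rho ^ m <= INR m * (1 - rho).
Proof. intros Hr. induction m. simpl. lra.
 rewrite S_INR. simpl. assert (0 <= rho ^ m <= 1) by (split; [apply pow_le; lra| apply pow_le_1'; lra]).
 nra. Qed.

Lemma approx (a : C) m rho : 0 <= rho <= 1 -> Cmod (a - a * RtoC (rho ^ m)) <= Cmod a * INR m * (1 - rho).
Proof. intros Hr. replace (a - a * RtoC (rho ^ m))%C with (a * RtoC (1 - rho ^ m))%C by (rewrite RtoC_minus; ring).
 rewrite Cmod_mult, Cmod_R. pose proof (one_minus_pow rho m Hr). rewrite Rabs_right by lra.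
 rewrite Rmult_assoc. apply Rmult_le_compat_l. apply Cmod_ge_0. lra. Qed.

Definition Bd G := forall rho th, 0 < rho < 1 -> Rabs (phi G rho th) <= 1 - rho ^ 2.


Lemma CF_val G rho x : Hol G -> Bd G -> 0 < rho < 1 ->
  Cmod ((Jr G x rho - RtoC rho * Jr G (x - 1) rho) +
            Cconj (Jr G (- x) rho - RtoC rho * Jr G (- x - 1) rho))%C <= 8 * PI * (1 - rho).
Proof. intros HG HB Hr. pose proof (CF_bound G rho x HG Hr (fun th => HB rho th Hr)) as B.
 rewrite CF_formula in B by auto. rewrite Cmod_mult, Cmod_inv, Cmod_R, Rabs_right in B by (try lra; apply RtoC_neq0; lra).
 pose proof PI_RGT_0.
 set (S := Cmod _) in *. assert (S <= 2 * ((1 - rho ^ 2) * (2 * PI - 0))) by lra.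
 assert ((1 - rho ^ 2) <= 2 * (1 - rho)) by nra. nra. Qed.

Lemma Jr_nz G k rho : Hol G -> 0 < rho < 1 -> Jr G (- INR k) rho = (acoef G k * RtoC (rho ^ k))%C.
Proof. apply Jr_coef. Qed.

Lemma conj_RtoC r : Cconj (RtoC r) = RtoC r.
Proof. unfold Cconj, RtoC; apply injective_projections; simpl; ring. Qed.

Lemma rel_k G k : Hol G -> Bd G -> (2 <= k)%nat -> acoef G k = acoef G (S k).
Proof. intros HG HB Hk. apply Cminus_eq_0_gen.
 apply limit_zero with (K := 8 * PI + Cmod (acoef G k) * INR k + Cmod (acoef G (S k)) * INR (S (S k))).
 intros rho Hr. assert (Hr' : 0 < rho < 1) by lra.
 pose proof (CF_val G rho (- INR k) HG HB Hr') as V.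
 rewrite Jr_nz in V by auto.
 replace (- INR k - 1) with (- INR (S k)) in V by (rewrite S_INR; ring).
 replace (- - INR k) with (INR k) in V by ring.
 replace (INR k - 1) with (INR (k - 1)) in V by (rewrite minus_INR by lia; simpl; ring).
 rewrite Jr_nz in V by auto. rewrite !Jr_pos_zero in V by (auto; lia).
 set (a := acoef G k) in *. set (b := acoef G (S k)) in *.
 set (Y := (a * RtoC (rho ^ k) - RtoC rho * (b * RtoC (rho ^ S k)))%C) in *.
 replace (Y + Cconj (0 - RtoC rho * 0))%C with Y in V by (rewrite Cminus_conj, Cmult_conj; unfold Cconj; apply injective_projections; simpl; ring).
 replace (a - b)%C with (Y + ((a - a * RtoC (rho ^ k)) - (b - b * RtoC (rho ^ (S (S k))))))%C.
 2: { unfold Y. replace (rho ^ S (S k)) with (rho * rho ^ S k) by (simpl; ring). rewrite RtoC_mult. ring. }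
 eapply Rle_trans. apply Cmod_triangle. eapply Rle_trans. apply Rplus_le_compat_l. apply Cmod_minus_le.
 pose proof (approx a k rho ltac:(lra)). pose proof (approx b (S (S k)) rho ltac:(lra)). nra. Qed.

Lemma conj_0 : Cconj 0%C = 0%C.
Proof. unfold Cconj; apply injective_projections; simpl; ring. Qed.

Lemma rel_1 G : Hol G -> Bd G -> (acoef G 1 - acoef G 2 - Cconj (acoef G 0))%C = 0%C.
Proof. intros HG HB.
 apply limit_zero with (K := 8 * PI + Cmod (acoef G 1) * INR 1 + Cmod (acoef G 2) * INR 3 + Cmod (Cconj (acoef G 0)) * INR 1).
 intros rho Hr. assert (Hr' : 0 < rho < 1) by lra.
 pose proof (CF_val G rho (- INR 1) HG HB Hr') as V.
 replace (- INR 1 - 1) with (- INR 2) in V by (simpl; ring).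
 replace (- - INR 1 - 1) with (- INR 0) in V by (simpl; ring).
 replace (- - INR 1) with (INR 1) in V by ring.
 rewrite !Jr_nz in V by auto. rewrite Jr_pos_zero in V by (auto; lia).
 set (a0 := acoef G 0) in *. set (a1 := acoef G 1) in *. set (a2 := acoef G 2) in *.
 rewrite Cminus_conj, Cmult_conj, Cmult_conj, !conj_RtoC, ?conj_0 in V.
 set (Y := (a1 * RtoC (rho ^ 1) - RtoC rho * (a2 * RtoC (rho ^ 2)) + (0 - RtoC rho * (Cconj a0 * RtoC (rho ^ 0))))%C) in *.
 replace (a1 - a2 - Cconj a0)%C with (Y + ((a1 - a1 * RtoC (rho ^ 1)) - (a2 - a2 * RtoC (rho ^ 3)) - (Cconj a0 - Cconj a0 * RtoC (rho ^ 1))))%C.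
 2: { unfold Y. replace (rho ^ 3) with (rho * rho ^ 2) by (simpl; ring). rewrite RtoC_mult.
      replace (rho ^ 1) with rho by (simpl; ring). replace (rho ^ 0) with 1 by (simpl; ring). ring. }
 eapply Rle_trans. apply Cmod_triangle. eapply Rle_trans. apply Rplus_le_compat_l. apply Cmod_minus_le.
 eapply Rle_trans. apply Rplus_le_compat_l. apply Rplus_le_compat_r. apply Cmod_minus_le.
 pose proof (approx a1 1 rho ltac:(lra)). pose proof (approx a2 3 rho ltac:(lra)).
 pose proof (approx (Cconj a0) 1 rho ltac:(lra)). nra. Qed.

Lemma RtoC_eq0 (x : R) : RtoC x = 0%C -> x = 0.
Proof. intros H. injection H. auto. Qed.

Lemma rel_0 G : Hol G -> Bd G -> Re (acoef G 0) = Re (acoef G 1).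
Proof. intros HG HB.
 assert (T0 : RtoC (Re (acoef G 0) - Re (acoef G 1)) = 0%C).
 { apply limit_zero with (K := 4 * PI + 2 * Rabs (Re (acoef G 1))).
   intros rho Hr. assert (Hr' : 0 < rho < 1) by lra.
   pose proof (CF_val G rho (- INR 0) HG HB Hr') as V.
   replace (- INR 0 - 1) with (- INR 1) in V by (simpl; ring).
   replace (- - INR 0 - 1) with (- INR 1) in V by (simpl; ring).
   replace (- - INR 0) with (- INR 0) in V by (simpl; ring).
   rewrite !Jr_nz in V by auto.
   set (a0 := acoef G 0) in *. set (a1 := acoef G 1) in *.
   set (X := (a0 * RtoC (rho ^ 0) - RtoC rho * (a1 * RtoC (rho ^ 1)))%C) in *.
   assert (EX : (X + Cconj X)%C = RtoC (2 * (Re a0 - rho ^ 2 * Re a1))).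
   { unfold X. destruct a0 as [u v], a1 as [u' v']. unfold Cconj, RtoC, Cplus, Cminus, Copp, Cmult, Re; simpl.
     apply injective_projections; simpl; ring. }
   rewrite EX, Cmod_R in V. rewrite Cmod_R.
   assert (Re a0 - Re a1 = (Re a0 - rho ^ 2 * Re a1) - (1 - rho ^ 2) * Re a1) by ring.
   rewrite H. eapply Rle_trans. apply Rabs_triang. rewrite Rabs_Ropp, Rabs_mult.
   rewrite (Rabs_right (1 - rho ^ 2)) by nra.
   rewrite Rabs_mult, (Rabs_right 2) in V by lra.
   pose proof (Rabs_pos (Re a1)). assert (1 - rho ^ 2 <= 2 * (1 - rho)) by nra.
   assert ((1 - rho ^ 2) * Rabs (Re a1) <= 2 * (1 - rho) * Rabs (Re a1)) by (apply Rmult_le_compat_r; lra). lra. }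
 apply RtoC_eq0 in T0. lra. Qed.

Lemma ak_const G : Hol G -> Bd G -> forall n, acoef G (n + 2) = acoef G 2.
Proof. intros HG HB n. induction n. reflexivity.
 rewrite <- IHn. symmetry. replace (S n + 2)%nat with (S (n + 2)) by lia. apply rel_k; auto; lia. Qed.

Lemma csum_closed G (z : C) n : Hol G -> Bd G -> z <> 1%C ->
  csum (fun k => acoef G k * Cpow z k)%C (S (S n)) =
  (acoef G 0 + acoef G 1 * z + acoef G 2 * (z * z - Cpow z (S (S n))) / (1 - z))%C.
Proof. intros HG HB Hz. assert (Hz1 : (1 - z)%C <> 0%C).
 { intros K. apply Hz. symmetry. apply Cminus_eq_0_gen. exact K. }
 induction n.
 - simpl. field. auto.
 - change (csum (fun k => acoef G k * Cpow z k)%C (S (S (S n))))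
     with (csum (fun k => acoef G k * Cpow z k)%C (S (S n)) + acoef G (S (S n)) * Cpow z (S (S n)))%C.
   rewrite IHn. replace (S (S n)) with (n + 2)%nat by lia. rewrite ak_const by auto.
   replace (S (n + 2)) with (S (S (S n))) by lia. replace (n + 2)%nat with (S (S n)) by lia.
   change (Cpow z (S (S (S n)))) with (z * Cpow z (S (S n)))%C. field. auto.
Qed.

Lemma closed_form G (z : C) : Hol G -> Bd G -> Cmod z < 1 ->
  (RtoC (2 * PI) * G z)%C = (acoef G 0 + acoef G 1 * z + acoef G 2 * (z * z) / (1 - z))%C.
Proof. intros HG HB Hz. apply Cminus_eq_0_gen. apply (Cmod_small _ 1); [lra|]. intros eps Heps.
 assert (Hz0 : 0 <= Cmod z) by apply Cmod_ge_0.
 assert (Hz1 : z <> 1%C). { intros K. rewrite K, Cmod_1 in Hz. lra. }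
 assert (H1z : (1 - z)%C <> 0%C).
 { intros K. apply Hz1. symmetry. apply Cminus_eq_0_gen. exact K. }
 assert (L1 : 1 - Cmod z <= Cmod (1 - z)).
 { pose proof (Cmod_rev (- z) 1). rewrite Cmod_opp, Cmod_1 in H. replace (- z + 1)%C with (1 - z)%C in H by ring. lra. }
 destruct (series G z HG Hz (eps / 2) ltac:(lra)) as [N0 HN0].
 set (a2 := acoef G 2).
 set (y := eps / 2 * (1 - Cmod z) / (Cmod a2 + 1)).
 assert (Hy : 0 < y) by (unfold y; apply Rdiv_lt_0_compat; [apply Rmult_lt_0_compat; lra| pose proof (Cmod_ge_0 a2); lra]).
 destruct (pow_lt_1_zero (Cmod z) ltac:(rewrite Rabs_right; lra) y Hy) as [N1 HN1].
 set (n := (N0 + N1)%nat).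
 specialize (HN0 (S (S n)) ltac:(unfold n; lia)).
 specialize (HN1 (S (S n)) ltac:(unfold n; lia)).
 rewrite csum_closed in HN0 by auto.
 rewrite Rabs_right in HN1 by (apply Rle_ge, pow_le; lra).
 replace (RtoC (2 * PI) * G z - (acoef G 0 + acoef G 1 * z + a2 * (z * z) / (1 - z)))%C with
   ((RtoC (2 * PI) * G z - (acoef G 0 + acoef G 1 * z + a2 * (z * z - Cpow z (S (S n))) / (1 - z)))
    - a2 * Cpow z (S (S n)) / (1 - z))%C by (field; auto).
 eapply Rle_trans. apply Cmod_minus_le. rewrite Rmult_1_l.
 assert (Cmod (a2 * Cpow z (S (S n)) / (1 - z)) <= eps / 2).
 { unfold Cdiv. rewrite !Cmod_mult, Cmod_inv, Cmod_pow by auto.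
   assert (0 < 1 - Cmod z) by lra.
   apply Rle_trans with (Cmod a2 * y * / (1 - Cmod z)).
   { apply Rmult_le_compat. apply Rmult_le_pos; [apply Cmod_ge_0|apply pow_le; lra].
     left; apply Rinv_0_lt_compat. apply Cmod_gt_0; auto.
     apply Rmult_le_compat_l. apply Cmod_ge_0. lra. apply Rinv_le_contravar; lra. }
   unfold y. apply Rle_trans with ((Cmod a2 + 1) * (eps / 2 * (1 - Cmod z) / (Cmod a2 + 1)) * / (1 - Cmod z)).
   { apply Rmult_le_compat_r. left; apply Rinv_0_lt_compat; lra. apply Rmult_le_compat_r. left; exact Hy. lra. }
   right. field. pose proof (Cmod_ge_0 a2). lra. }
 fold a2 in HN0. lra. Qed.

Lemma key_identity (w f : C) : Re ((1 - Cconj w) * (f + w * Cconj f))%C = (1 - Cmod w ^ 2) * Re f.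
Proof. rewrite Cmod2_alt. destruct w as [x y], f as [u v]. unfold Re, Im, Cconj, Cmult, Cplus, Cminus, Copp; simpl. ring. Qed.

Lemma Cmod_rhoE rho th : 0 <= rho -> Cmod (RtoC rho * E th) = rho.
Proof. intros H. rewrite Cmod_mult, Cmod_E, Cmod_R, Rabs_right; lra. Qed.

Theorem theorem1 (F : C -> C) :
  (forall z : C, in_disc z -> 0 <= Re (F z) <= 1) ->
  holomorphic_on_disc (fun z => Cplus (F z) (Cmult z (Cconj (F z)))) ->
  exists c : C, forall z : C, in_disc z -> F z = c.
Proof. intros HF HH.
 set (G := fun z => Cplus (F z) (Cmult z (Cconj (F z)))).
 assert (HG : Hol G).
 { intros z Hz. destruct (HH z Hz) as [l Hl]. exists l. apply derive_Cdiff. exact Hl. }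
 assert (HB : Bd G).
 { intros rho th Hr. unfold phi. set (w := (RtoC rho * E th)%C).
   assert (Hw : Cmod w = rho) by (apply Cmod_rhoE; lra).
   unfold G. rewrite key_identity, Hw.
   assert (Hd : in_disc w) by (unfold in_disc; lra).
   destruct (HF w Hd). assert (0 < 1 - rho ^ 2) by nra.
   rewrite Rabs_mult, (Rabs_right (1 - rho ^ 2)) by lra. rewrite Rabs_right by lra. nra. }
 pose proof twoPI_pos as HP.
 set (a0 := acoef G 0). set (a1 := acoef G 1). set (a2 := acoef G 2).
 set (c := F 0%C).
 assert (CF0 : (RtoC (2 * PI) * G 0%C)%C = (a0 + a1 * 0 + a2 * (0 * 0) / (1 - 0))%C).
 { apply closed_form; auto. rewrite Cmod_0. lra. }
 assert (Ha0 : a0 = (RtoC (2 * PI) * c)%C).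
 { rewrite <- (Cplus_0_r a0). replace (a0 + 0)%C with (a0 + a1 * 0 + a2 * (0 * 0) / (1 - 0))%C by (field; intros K; injection K; lra).
   rewrite <- CF0. unfold G, c. ring. }
 pose proof (rel_1 G HG HB) as R1. fold a0 a1 a2 in R1.
 pose proof (rel_0 G HG HB) as R0. fold a0 a1 in R0.
 assert (Ha1 : a1 = (a2 + Cconj a0)%C) by (apply Cminus_eq_0_gen; rewrite <- R1; ring).
 assert (Re2 : Re a2 = 0).
 { rewrite Ha1 in R0. destruct a2, a0. unfold Re, Cconj, Cplus in *; simpl in *. lra. }
 assert (EQ1 : forall z, Cmod z < 1 ->
   (a2 * z / (1 - z))%C = (RtoC (2 * PI) * ((F z - c) + z * Cconj (F z - c)))%C).
 { intros z Hz. assert (Hz1 : (1 - z)%C <> 0%C).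
   { intros K. assert (z = 1%C) by (symmetry; apply Cminus_eq_0_gen; exact K). subst z. rewrite Cmod_1 in Hz. lra. }
   pose proof (closed_form G z HG HB Hz) as CFz. fold a0 a1 a2 in CFz.
   transitivity (RtoC (2 * PI) * G z - a0 - Cconj a0 * z)%C.
   rewrite CFz, Ha1. field. auto.
   rewrite Ha0. unfold G. rewrite Cmult_conj, conj_RtoC, Cminus_conj. ring. }
 assert (KEY : forall z, Cmod z < 1 ->
   (2 * PI) * ((1 - Cmod z ^ 2) * (Re (F z) - Re c)) = Re ((1 - Cconj z) * (a2 * z / (1 - z)))%C).
 { intros z Hz. rewrite (EQ1 z Hz).
   assert (Re_sc : forall (u X : C) (r : R), Re (u * (RtoC r * X))%C = r * Re (u * X)%C).
   { intros u X r. destruct u, X. unfold Re, RtoC, Cmult; simpl. ring. }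
   rewrite Re_sc, key_identity.
   assert (Re (F z - c)%C = Re (F z) - Re c) by (destruct (F z), c; unfold Re, Cminus, Cplus, Copp; simpl; ring).
   rewrite H. ring. }
 assert (B0 : Im a2 = 0).
 { destruct (Req_dec (Im a2) 0) as [|Hb]; auto. exfalso.
   set (b := Im a2).
   set (t := Rmin (1/4) (Rabs b / (8 * PI))).
   assert (Hbp : 0 < Rabs b) by (apply Rabs_pos_lt; auto).
   assert (Ht : 0 < t) by (apply Rmin_glb_lt; [lra| apply Rdiv_lt_0_compat; lra]).
   assert (Ht1 : t <= 1/4) by apply Rmin_l.
   assert (Ht2 : t <= Rabs b / (8 * PI)) by apply Rmin_r.
   set (zt := (1 - t, t) : C).
   assert (Hzt : Cmod zt < 1).
   { assert (Cmod zt ^ 2 < 1). { rewrite Cmod2_alt. unfold zt, Re, Im; simpl. nra. }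
     pose proof (Cmod_ge_0 zt). nra. }
   pose proof (KEY zt Hzt) as K.
   assert (Hm : Cmod zt ^ 2 = (1 - t) ^ 2 + t ^ 2) by (rewrite Cmod2_alt; unfold zt; simpl; auto).
   rewrite Hm in K.
   assert (R : Re ((1 - Cconj zt) * (a2 * zt / (1 - zt)))%C = - b * (1 - t)).
   { unfold b, zt. destruct a2 as [p q]. unfold Re, Im in *. simpl in Re2. subst p.
     unfold Cdiv, Cinv, Cmult, Cminus, Cplus, Copp, Cconj, RtoC; simpl. field. replace ((1 + - (1 - t)) * (1 + - (1 - t)) + - t * - t) with (2 * (t * t)) by ring. assert (0 < t * t) by nra. lra. }
   rewrite R in K.
   assert (Hdz : in_disc zt) by (unfold in_disc; auto).
   assert (Hd0 : in_disc 0%C) by (unfold in_disc; rewrite Cmod_0; lra).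
   destruct (HF zt Hdz) as [F1 F2]. destruct (HF 0%C Hd0) as [F3 F4]. fold c in F3, F4.
   set (d := Re (F zt) - Re c) in *.
   assert (Hd : -1 <= d <= 1) by (unfold d; lra).
   assert (E2 : (1 - t) * (4 * PI * t * d + b) = 0).
   { replace (1 - ((1 - t) ^ 2 + t ^ 2)) with (2 * t * (1 - t)) in K by ring. nra. }
   apply Rmult_integral in E2. destruct E2 as [E2|E2]. lra.
   assert (Rabs b <= 4 * PI * t).
   { replace b with (- (4 * PI * t * d)) by lra. rewrite Rabs_Ropp, Rabs_mult.
     rewrite (Rabs_right (4 * PI * t)) by nra. assert (Rabs d <= 1) by (apply Rabs_le; lra).
     assert (0 <= 4 * PI * t) by nra. nra. }
   assert (4 * PI * t <= Rabs b / 2).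
   { apply Rle_trans with (4 * PI * (Rabs b / (8 * PI))). apply Rmult_le_compat_l; lra.
     right. field. lra. }
   lra. }
 assert (A2 : a2 = 0%C) by (destruct a2; unfold Re, Im in *; simpl in *; subst; reflexivity).
 exists c. intros z Hz. unfold in_disc in Hz.
 pose proof (EQ1 z Hz) as E. rewrite A2 in E.
 assert (Z : ((F z - c) + z * Cconj (F z - c))%C = 0%C).
 { apply (f_equal (fun u => (/ RtoC (2 * PI) * u)%C)) in E.
   assert (RtoC (2 * PI) <> 0%C) by (apply RtoC_neq0; lra).
   rewrite Cmult_assoc, Cinv_l, Cmult_1_l in E by auto. rewrite <- E. field. split; auto.
   intros K. assert (z = 1%C) by (symmetry; apply Cminus_eq_0_gen; exact K). subst z. rewrite Cmod_1 in Hz. lra. }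
 set (f := (F z - c)%C) in *.
 assert (Ef : f = (- (z * Cconj f))%C).
 { apply Cminus_eq_0_gen. transitivity (f + z * Cconj f)%C. ring. exact Z. }
 assert (M : Cmod f = Cmod z * Cmod f).
 { rewrite Ef at 1. rewrite Cmod_opp, Cmod_mult, Cmod_conj. reflexivity. }
 assert (Cmod f = 0) by (pose proof (Cmod_ge_0 f); pose proof (Cmod_ge_0 z); nra).
 apply Cmod_eq_0 in H. apply Cminus_eq_0_gen. exact H.
Qed.
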